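(* Let $(y_\beta)_{\beta>0}\subset\mathcal M$ be such that $(\beta y_\beta)$ converges vaguely on $[0,1)$ to some function $\alpha$ and $$L:=\lim_{\beta\to\infty}\int_0^1\beta y_\beta(s)ds<\infty.$$ Assume there exist $v_\beta\in[0,1)$ with $y_\beta(v_\beta)=1$ for all $\beta>0$ such that $\delta:=\lim_{\beta\to\infty}\beta(1-v_\beta)\in(0,\infty)$. Then $$\lim_{\beta\to\infty}\frac{\mathcal Q_\beta(y_\beta)}\beta=\frac12\Big((\xi'(1)+h^2)L-\int_0^1\xi''(q)\Big(\int_0^q\alpha(s)ds\Big)dq+\int_0^1\frac{dq}{L-\int_0^q\alpha(s)ds}\Big).$$
   Context: Let $(\gamma_p)_{p\ge2}$ be real with $\sum_{p\ge2}2^p\gamma_p^2<\infty$, $h\in\mathbb R$, $\xi(s)=\sum_{p\ge2}\gamma_p^2s^p$; for $\beta>0$, $\xi_\beta=\beta^2\xi$, $h_\beta=\beta h$. $\mathcal M$ is the set of distribution functions $x$ on $[0,1]$ with $x(\hat q)=1$ for some $\hat q<1$; for $x\in\mathcal M$, $\hat x(q)=\int_q^1x(s)ds$ and $\mathcal Q_\beta(x)=\frac12\big(\int_0^1(\xi'_\beta(q)+h_\beta^2)x(q)dq+\int_0^{\hat q}\frac{dq}{\hat x(q)}+\log(1-\hat q)\big)$, for any $\hat q<1$ with $x(\hat q)=1$ (independent of the choice). Vague convergence of $\beta y_\beta$ to $\alpha$ on $[0,1)$ means $\beta y_\beta(s)\to\alpha(s)$ at every continuity point $s\in[0,1)$ of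 $\alpha$. *)

(* Defs.v *)
From Stdlib Require Import Reals Lra ClassicalEpsilon.
From Coquelicot Require Import Coquelicot.
Open Scope R_scope.

Definition xi_term (gamma : nat -> R) (s : R) (p : nat) : R :=
  if (p <? 2)%nat then 0 else (gamma p) ^ 2 * s ^ p.

Definition xi (gamma : nat -> R) (s : R) : R := Series (xi_term gamma s).

Definition xi_beta (gamma : nat -> R) (beta : R) (s : R) : R := beta ^ 2 * xi gamma s.
Definition h_beta (h beta : R) : R := beta * h.

(* The class M: distribution functions x on [0,1] (nondecreasing, right-continuous,
   values in [0,1]) with x(qh) = 1 for some qh in [0,1). *)
Definition inM (x : R -> R) : Prop :=
  (forall s t, 0 <= s -> s <= t -> t <= 1 -> x s <= x t) /\
  (forall s, 0 <= s <= 1 -> 0 <= x s <= 1) /\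
  (forall s, 0 <= s < 1 ->
     forall eps, 0 < eps -> exists d, 0 < d /\
       forall t, s <= t < s + d -> t <= 1 -> Rabs (x t - x s) < eps) /\
  (exists qh, 0 <= qh < 1 /\ x qh = 1).

Definition xhat (x : R -> R) (q : R) : R := RInt x q 1.

Definition Q_at (gamma : nat -> R) (h beta : R) (x : R -> R) (qh : R) : R :=
  / 2 * ( RInt (fun q => (Derive (xi_beta gamma beta) q + (h_beta h beta) ^ 2) * x q) 0 1
        + RInt (fun q => / xhat x q) 0 qh
        + ln (1 - qh) ).

Definition choose_qh (x : R -> R) : R :=
  epsilon (inhabits 0) (fun qh => 0 <= qh < 1 /\ x qh = 1).

Definition Q (gamma : nat -> R) (h beta : R) (x : R -> R) : R :=
  Q_at gamma h beta x (choose_qh x).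

Definition cont_on_01 (alpha : R -> R) (s : R) : Prop :=
  forall eps, 0 < eps -> exists d, 0 < d /\
    forall t, 0 <= t < 1 -> Rabs (t - s) < d -> Rabs (alpha t - alpha s) < eps.

Definition vague_cvg (y : R -> R -> R) (alpha : R -> R) : Prop :=
  forall s, 0 <= s < 1 -> cont_on_01 alpha s ->
    is_lim (fun beta => beta * y beta s) p_infty (alpha s).

(* Main.v *)
Require Import Defs.
From Stdlib Require Import Reals Lra Lia ZArith Classical ClassicalEpsilon FunctionalExtensionality.
From Coquelicot Require Import Coquelicot.
Open Scope R_scope.

Lemma const_step (g : R -> R) (a b c : R) :
  a <= b -> (forall x, a < x < b -> g x = c) -> IsStepFun g a b.
Proof.
  intros Hab Hg. exists (cons a (cons b nil)). exists (cons c nil).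
  unfold adapted_couple. simpl. split; [|split;[|split;[|split]]].
  - intros i Hi. simpl in Hi. destruct i; [simpl; lra| lia].
  - unfold Rmin; destruct (Rle_dec a b); lra.
  - unfold Rmax; destruct (Rle_dec a b); lra.
  - reflexivity.
  - intros i Hi. simpl in Hi. destruct i; [|lia]. simpl.
    intros x Hx. apply Hg. exact Hx.
Qed.

Lemma lattice_step (e : R) (He : 0 < e) : forall (N : nat) (a b c : R) (g : R -> R),
  a <= b ->
  (forall x y, a < x -> x <= y -> y <= b -> g x <= g y) ->
  (forall x, a < x <= b -> exists k : Z, g x = e * IZR k) ->
  (exists k : Z, c = e * IZR k) ->
  (forall x, a < x <= b -> c <= g x) ->
  g b - c <= INR N * e -> IsStepFun g a b.
Proof.
  induction N as [|N IH]; intros a b c g Hab Hmon Hlat Hc Hcle Hbound.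
  - apply (const_step g a b c Hab). intros x Hx.
    assert (g x <= g b) by (apply Hmon; lra). assert (c <= g x) by (apply Hcle; lra).
    simpl in Hbound. lra.
  - destruct (Rle_lt_dec (c + e) (g b)) as [Hbig|Hsmall].
    2:{ apply (const_step g a b c Hab). intros x Hx.
        assert (g x <= g b) by (apply Hmon; lra). assert (c <= g x) by (apply Hcle; lra).
        destruct (Hlat x ltac:(lra)) as [kx Hkx]. destruct Hc as [kc Hkc].
        assert (IZR kx < IZR (kc + 1)).
        { rewrite plus_IZR. apply Rmult_lt_reg_l with e; lra. }
        assert (IZR kc <= IZR kx).
        { apply Rmult_le_reg_l with e; lra. }
        apply lt_IZR in H1. apply le_IZR in H2. assert (kx = kc) by lia. subst. lra. }
    set (E := fun x => a <= x <= b /\ (x = a \/ g x <= c)).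
    assert (HE : bound E) by (exists b; intros x [Hx _]; lra).
    assert (HEa : exists x, E x) by (exists a; split; [lra|left; reflexivity]).
    destruct (completeness E HE HEa) as [s [Hs1 Hs2]].
    assert (Has : a <= s) by (apply Hs1; split; [lra|left;reflexivity]).
    assert (Hsb : s <= b) by (apply Hs2; intros x [Hx _]; lra).
    apply StepFun_P46 with s.
    + apply (const_step g a s c Has). intros x Hx.
      assert (exists x', E x' /\ x < x').
      { apply NNPP; intro Hn. assert (s <= x); [|lra].
        apply Hs2. intros z Hz. apply Rnot_lt_le. intro Hl. apply Hn. exists z; auto. }
      destruct H as [x' [[Hx'1 [Hx'2|Hx'2]] Hx'3]]; [lra|].
      assert (g x <= g x') by (apply Hmon; lra). assert (c <= g x) by (apply Hcle; lra). lra.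
    + apply (IH s b (c + e) g Hsb).
      * intros x y Hx Hxy Hy. apply Hmon; lra.
      * intros x Hx. apply Hlat. lra.
      * destruct Hc as [kc Hkc]. exists (kc + 1)%Z. rewrite plus_IZR. lra.
      * intros x Hx. destruct (Rle_lt_dec (g x) c) as [Hle|Hlt].
        { assert (x <= s); [|lra]. apply Hs1. split; [lra|right; exact Hle]. }
        destruct (Hlat x ltac:(lra)) as [kx Hkx]. destruct Hc as [kc Hkc].
        assert (IZR kc < IZR kx) by (apply Rmult_lt_reg_l with e; lra).
        apply lt_IZR in H. assert (IZR kc + 1 <= IZR kx).
        { rewrite <- plus_IZR. apply IZR_le. lia. }
        nra.
      * rewrite S_INR in Hbound. lra.
Qed.

Definition floorE (e r : R) : R := e * IZR (up (r / e) - 1).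

Lemma up_mono (r s : R) : r <= s -> (up r <= up s)%Z.
Proof.
  intros H. destruct (archimed r) as [H1 H2]. destruct (archimed s) as [H3 H4].
  apply Z.nlt_ge. intro Hlt. assert (up s <= up r - 1)%Z by lia.
  apply IZR_le in H0. rewrite minus_IZR in H0. simpl in H0. lra.
Qed.

Lemma floorE_spec (e r : R) : 0 < e -> floorE e r <= r < floorE e r + e.
Proof.
  intros He. unfold floorE. destruct (archimed (r / e)) as [H1 H2].
  rewrite minus_IZR. simpl.
  assert (r = e * (r / e)) by (field; lra).
  split; nra.
Qed.

Lemma mono_Riemann (f : R -> R) (a b : R) : a <= b ->
  (forall x y, a <= x -> x <= y -> y <= b -> f x <= f y) -> Riemann_integrable f a b.
Proof.
  intros Hab Hmon eps.
  set (e := eps / (2 * (b - a + 1))).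
  assert (He : 0 < e).
  { unfold e. apply Rdiv_lt_0_compat. apply cond_pos. lra. }
  assert (Hst : IsStepFun (fun x => floorE e (f x)) a b).
  { destruct (Rle_lt_dec a b) as [_|]; [|lra].
    apply (lattice_step e He (Z.to_nat (up (f b / e) - up (f a / e))) a b (floorE e (f a))); auto.
    - intros x y Hx Hxy Hy. unfold floorE. apply Rmult_le_compat_l; [lra|].
      apply IZR_le. assert (up (f x / e) <= up (f y / e))%Z; [|lia].
      apply up_mono. unfold Rdiv. apply Rmult_le_compat_r.
      left; apply Rinv_0_lt_compat; lra. apply Hmon; lra.
    - intros x _. unfold floorE. eexists; reflexivity.
    - unfold floorE. eexists; reflexivity.
    - intros x Hx. unfold floorE. apply Rmult_le_compat_l; [lra|].
      apply IZR_le. assert (up (f a / e) <= up (f x / e))%Z; [|lia].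
      apply up_mono. unfold Rdiv. apply Rmult_le_compat_r.
      left; apply Rinv_0_lt_compat; lra. apply Hmon; lra.
    - unfold floorE. assert (Hz : (up (f a / e) <= up (f b / e))%Z).
      { apply up_mono. unfold Rdiv. apply Rmult_le_compat_r.
        left; apply Rinv_0_lt_compat; lra. apply Hmon; lra. }
      rewrite INR_IZR_INZ, Z2Nat.id by lia. rewrite !minus_IZR. simpl. lra. }
  exists (mkStepFun Hst). exists (mkStepFun (StepFun_P4 a b e)). split.
  - intros t Ht. simpl. unfold fct_cte.
    destruct (floorE_spec e (f t) He). rewrite Rabs_right; lra.
  - rewrite StepFun_P18. rewrite Rabs_right by nra.
    unfold e. apply Rlt_le_trans with (eps / 2 * 1).
    + unfold Rdiv. rewrite Rinv_mult. 
      assert (0 < / (b - a + 1)) by (apply Rinv_0_lt_compat; lra).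
      assert ((b - a) * / (b - a + 1) < 1).
      { apply Rmult_lt_reg_r with (b - a + 1); [lra|].
        rewrite Rmult_assoc, Rinv_l by lra. lra. }
      pose proof (cond_pos eps). nra.
    + pose proof (cond_pos eps). lra.
Qed.

Lemma mono_ex_RInt (f : R -> R) (a b : R) : a <= b ->
  (forall x y, a <= x -> x <= y -> y <= b -> f x <= f y) -> ex_RInt f a b.
Proof. intros. apply ex_RInt_Reals_1. apply mono_Riemann; auto. Qed.

Definition Ev (P : R -> Prop) := exists M, forall x, M < x -> P x.

Lemma Ev_and (P Q : R -> Prop) : Ev P -> Ev Q -> Ev (fun x => P x /\ Q x).
Proof. intros [M1 H1] [M2 H2]. exists (Rmax M1 M2). intros x Hx.
  split; [apply H1|apply H2]; pose proof (Rmax_l M1 M2); pose proof (Rmax_r M1 M2); lra. Qed.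

Lemma Ev_mono (P Q : R -> Prop) : (forall x, P x -> Q x) -> Ev P -> Ev Q.
Proof. intros H [M HM]. exists M. intros; auto. Qed.

Lemma Ev_gt (c : R) : Ev (fun x => c < x).
Proof. exists c. auto. Qed.

Lemma lim_Ev (f : R -> R) (l : R) : is_lim f p_infty l ->
  forall eps, 0 < eps -> Ev (fun x => Rabs (f x - l) < eps).
Proof. intros H eps He. apply is_lim_spec in H. exact (H (mkposreal eps He)). Qed.

Lemma Ev_lim (f : R -> R) (l : R) :
  (forall eps, 0 < eps -> Ev (fun x => Rabs (f x - l) < eps)) -> is_lim f p_infty l.
Proof. intros H. apply is_lim_spec. intros eps. apply H. apply cond_pos. Qed.

Lemma RInt_scal_R (f : R -> R) a b l : ex_RInt f a b ->
  RInt (fun x => l * f x) a b = l * RInt f a b.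
Proof. intros H. apply (RInt_scal f a b l H). Qed.

Lemma RInt_plus_R (f g : R -> R) a b : ex_RInt f a b -> ex_RInt g a b ->
  RInt (fun x => f x + g x) a b = RInt f a b + RInt g a b.
Proof. intros H1 H2. apply (RInt_plus f g a b H1 H2). Qed.

Lemma RInt_minus_R (f g : R -> R) a b : ex_RInt f a b -> ex_RInt g a b ->
  RInt (fun x => f x - g x) a b = RInt f a b - RInt g a b.
Proof. intros H1 H2. apply (RInt_minus f g a b H1 H2). Qed.

Lemma RInt_const_R (c a b : R) : RInt (fun _ => c) a b = (b - a) * c.
Proof. rewrite RInt_const. reflexivity. Qed.

Lemma Chasles_R (f : R -> R) a b c : ex_RInt f a b -> ex_RInt f b c ->
  RInt f a b + RInt f b c = RInt f a c.
Proof. intros H1 H2. apply (RInt_Chasles f a b c H1 H2). Qed.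

Lemma RInt_point_R (f : R -> R) a : RInt f a a = 0.
Proof. apply (RInt_point a f). Qed.

Lemma ex_sub (f : R -> R) a b c d : a <= c -> c <= d -> d <= b -> ex_RInt f a b -> ex_RInt f c d.
Proof. intros H1 H2 H3 H. apply (ex_RInt_Chasles_2 (V:=R_CompleteNormedModule) f a c d); [lra|].
  apply (ex_RInt_Chasles_1 (V:=R_CompleteNormedModule) f a d b); [lra|exact H]. Qed.

Lemma RInt_le_const_l (f : R -> R) a b c : a <= b -> ex_RInt f a b ->
  (forall x, a < x < b -> c <= f x) -> (b - a) * c <= RInt f a b.
Proof. intros Hab Hf Hc. rewrite <- RInt_const_R. apply RInt_le; auto.
  apply ex_RInt_const. Qed.

Lemma RInt_le_const_r (f : R -> R) a b c : a <= b -> ex_RInt f a b ->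
  (forall x, a < x < b -> f x <= c) -> RInt f a b <= (b - a) * c.
Proof. intros Hab Hf Hc. rewrite <- RInt_const_R. apply RInt_le; auto.
  apply ex_RInt_const. Qed.

Lemma abs_RInt_open (f : R -> R) a b M : a <= b -> ex_RInt f a b ->
  (forall x, a < x < b -> Rabs (f x) <= M) -> Rabs (RInt f a b) <= (b - a) * M.
Proof. intros Hab Hf HM. apply Rabs_le. split.
  - assert (- ((b - a) * M) = (b - a) * (- M)) by ring. rewrite H.
    apply RInt_le_const_l; auto. intros x Hx. specialize (HM x Hx). apply Rabs_le_between in HM. lra.
  - apply RInt_le_const_r; auto. intros x Hx. specialize (HM x Hx). apply Rabs_le_between in HM. lra.
Qed.

Definition contp (alpha : R -> R) (s : R) : Prop :=
  forall eps, 0 < eps -> exists d, 0 < d /\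
    forall t, 0 <= t < 1 -> Rabs (t - s) < d -> Rabs (alpha t - alpha s) < eps.

Section ContPoint.
Variable alpha : R -> R.
Hypothesis Hmono : forall s t, 0 <= s -> s <= t -> t < 1 -> alpha s <= alpha t.

Definition stepI (p : R * R) : R * R :=
  let (a, b) := p in let h := (b - a) / 4 in
  if Rle_dec (alpha (a + 2 * h) - alpha (a + h)) (alpha (a + 3 * h) - alpha (a + 2 * h))
  then (a + h, a + 2 * h) else (a + 2 * h, a + 3 * h).

Fixpoint seqI (u w : R) (n : nat) : R * R :=
  match n with O => (u, w) | S n => stepI (seqI u w n) end.

Lemma seqI_prop (u w : R) : 0 <= u -> u < w -> w < 1 -> forall n,
  u <= fst (seqI u w n) /\ fst (seqI u w n) < snd (seqI u w n) /\ snd (seqI u w n) <= w /\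
  alpha (snd (seqI u w n)) - alpha (fst (seqI u w n)) <= (alpha w - alpha u) * (/2) ^ n /\
  fst (seqI u w n) < fst (seqI u w (S n)) /\ snd (seqI u w (S n)) < snd (seqI u w n).
Proof.
  intros Hu Huw Hw n. induction n as [|n IH].
  - simpl. unfold stepI. set (h := (w - u) / 4).
    assert (0 < h) by (unfold h; lra).
    destruct Rle_dec; simpl; repeat split; unfold h in *; lra.
  - destruct IH as [H1 [H2 [H3 [H4 [H5 H6]]]]].
    change (seqI u w (S n)) with (stepI (seqI u w n)) in *.
    change (seqI u w (S (S n))) with (stepI (stepI (seqI u w n))).
    destruct (seqI u w n) as [a b]. simpl in H1, H2, H3, H4.
    unfold stepI in H5, H6 |- *. set (h := (b - a) / 4) in *.
    assert (0 < h) by (unfold h; lra).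
    assert (alpha a <= alpha (a + h)) by (apply Hmono; unfold h; lra).
    assert (alpha (a + 3 * h) <= alpha b) by (apply Hmono; unfold h; lra).
    destruct Rle_dec as [Hc|Hc]; simpl in *;
      repeat split; try lra; destruct Rle_dec; simpl; lra.
Qed.

Lemma cont_point (u w : R) : 0 <= u -> u < w -> w < 1 ->
  exists s, u < s < w /\ contp alpha s.
Proof.
  intros Hu Huw Hw. pose proof (seqI_prop u w Hu Huw Hw) as P.
  assert (Hnest : forall n m, fst (seqI u w n) <= snd (seqI u w m)).
  { assert (Hf : forall n k, fst (seqI u w n) <= fst (seqI u w (n + k))).
    { intros n k. induction k. rewrite Nat.add_0_r; lra.
      rewrite Nat.add_succ_r. destruct (P (n + k)%nat) as [_ [_ [_ [_ [H _]]]]]. lra. }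
    assert (Hs : forall n k, snd (seqI u w (n + k)) <= snd (seqI u w n)).
    { intros n k. induction k. rewrite Nat.add_0_r; lra.
      rewrite Nat.add_succ_r. destruct (P (n + k)%nat) as [_ [_ [_ [_ [_ H]]]]]. lra. }
    intros n m. destruct (Nat.le_ge_cases n m) as [Hnm|Hnm].
    - replace m with (n + (m - n))%nat by lia.
      specialize (Hs n (m - n)%nat). specialize (Hf n (m - n)%nat).
      destruct (P (n + (m - n))%nat) as [_ [H _]]. lra.
    - replace n with (m + (n - m))%nat by lia.
      specialize (Hs m (n - m)%nat). specialize (Hf m (n - m)%nat).
      destruct (P (m + (n - m))%nat) as [_ [H _]]. lra. }
  set (E := fun x => exists n, x = fst (seqI u w n)).
  assert (HE : bound E). { exists w. intros x [n ->]. destruct (P n) as [_ [H1 [H2 _]]]. lra. }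
  assert (HEa : exists x, E x) by (exists u; exists O; reflexivity).
  destruct (completeness E HE HEa) as [s [Hs1 Hs2]].
  assert (Hlo : forall n, fst (seqI u w n) < s).
  { intros n. destruct (P n) as [_ [_ [_ [_ [H _]]]]].
    assert (fst (seqI u w (S n)) <= s) by (apply Hs1; exists (S n); reflexivity). lra. }
  assert (Hhi : forall n, s < snd (seqI u w n)).
  { intros n. destruct (P n) as [_ [_ [_ [_ [_ H]]]]].
    assert (s <= snd (seqI u w (S n))).
    { apply Hs2. intros x [m ->]. apply Hnest. }
    lra. }
  exists s. split.
  - specialize (Hlo O). specialize (Hhi O). simpl in *. lra.
  - intros eps Heps.
    assert (HV : alpha u <= alpha w) by (apply Hmono; lra).
    destruct (pow_lt_1_zero (/2) ltac:(rewrite Rabs_right; lra) (eps / (alpha w - alpha u + 1)))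
      as [N HN].
    { apply Rdiv_lt_0_compat; lra. }
    specialize (HN N (le_n N)). rewrite Rabs_right in HN by (apply Rle_ge, pow_le; lra).
    set (a := fst (seqI u w N)) in *. set (b := snd (seqI u w N)) in *.
    pose proof (Hlo N) as Ha. pose proof (Hhi N) as Hb. fold a b in Ha, Hb.
    destruct (P N) as [Pa [Pab [Pb [PV _]]]]. fold a b in Pa, Pab, Pb, PV.
    exists (Rmin (s - a) (b - s)). split.
    + apply Rmin_pos; lra.
    + intros t Ht Hts.
      assert (Hm1 := Rmin_l (s - a) (b - s)). assert (Hm2 := Rmin_r (s - a) (b - s)).
      apply Rabs_lt_between in Hts.
      assert (alpha a <= alpha t) by (apply Hmono; lra).
      assert (alpha t <= alpha b) by (apply Hmono; lra).
      assert (alpha a <= alpha s) by (apply Hmono; lra).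
      assert (alpha s <= alpha b) by (apply Hmono; lra).
      assert (alpha b - alpha a < eps).
      { apply Rle_lt_trans with ((alpha w - alpha u) * (/ 2) ^ N); [exact PV|].
        apply Rle_lt_trans with ((alpha w - alpha u + 1) * (/ 2) ^ N).
        - assert (0 <= (/2)^N) by (apply pow_le; lra). nra.
        - apply Rmult_lt_reg_r with (/ (alpha w - alpha u + 1)).
          apply Rinv_0_lt_compat; lra.
          replace ((alpha w - alpha u + 1) * (/ 2) ^ N * / (alpha w - alpha u + 1)) with ((/2)^N)
            by (field; lra). exact HN. }
      apply Rabs_lt_between. lra.
Qed.
End ContPoint.

Section PW.
Variable f : R -> R -> R.
Variable alpha : R -> R.
Hypothesis Hfmon : forall b, 0 < b -> forall s t, 0 <= s -> s <= t -> t <= 1 -> f b s <= f b t.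
Hypothesis Hfpos : forall b, 0 < b -> forall s, 0 <= s <= 1 -> 0 <= f b s.
Hypothesis Hamon : forall s t, 0 <= s -> s <= t -> t < 1 -> alpha s <= alpha t.
Hypothesis Hconv : forall s, 0 <= s < 1 -> contp alpha s ->
  forall eps, 0 < eps -> Ev (fun b => Rabs (f b s - alpha s) < eps).

Lemma exf b x y : 0 < b -> 0 <= x -> x <= y -> y <= 1 -> ex_RInt (f b) x y.
Proof. intros. apply mono_ex_RInt; auto. intros; apply Hfmon; lra. Qed.

Lemma exa x y : 0 <= x -> x <= y -> y < 1 -> ex_RInt alpha x y.
Proof. intros. apply mono_ex_RInt; auto. intros; apply Hamon; lra. Qed.

Lemma boundf b x y : 0 < b -> 0 <= x -> x <= y -> y <= 1 ->
  (y - x) * f b x <= RInt (f b) x y <= (y - x) * f b y.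
Proof. intros. split.
  - apply RInt_le_const_l; [lra| apply exf; lra|]. intros; apply Hfmon; lra.
  - apply RInt_le_const_r; [lra| apply exf; lra|]. intros; apply Hfmon; lra. Qed.

Lemma bounda x y : 0 <= x -> x <= y -> y < 1 ->
  (y - x) * alpha x <= RInt alpha x y <= (y - x) * alpha y.
Proof. intros. split.
  - apply RInt_le_const_l; [lra| apply exa; lra|]. intros; apply Hamon; lra.
  - apply RInt_le_const_r; [lra| apply exa; lra|]. intros; apply Hamon; lra. Qed.

Lemma pw_base a b : 0 <= a -> a < b -> b < 1 -> contp alpha a -> contp alpha b ->
  forall eps, 0 < eps ->
  Ev (fun be => Rabs (RInt (f be) a b - RInt alpha a b) <= (b - a) * (alpha b - alpha a) + eps).
Proof.
  intros Ha Hab Hb Ca Cb eps He.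
  set (eta := eps / (b - a)).
  assert (Heta : 0 < eta) by (unfold eta; apply Rdiv_lt_0_compat; lra).
  assert (E1 := Hconv a ltac:(lra) Ca eta Heta).
  assert (E2 := Hconv b ltac:(lra) Cb eta Heta).
  generalize (Ev_and _ _ (Ev_and _ _ E1 E2) (Ev_gt 0)).
  apply Ev_mono. intros be [[H1 H2] Hbe].
  destruct (boundf be a b Hbe Ha ltac:(lra) ltac:(lra)) as [B1 B2].
  destruct (bounda a b Ha ltac:(lra) ltac:(lra)) as [B3 B4].
  apply Rabs_lt_between in H1. apply Rabs_lt_between in H2.
  assert (Hba : 0 < b - a) by lra.
  assert (eps = (b - a) * eta) by (unfold eta; field; lra).
  apply Rabs_le. split; nra.
Qed.

Lemma pw_ind n : forall a b, 0 <= a -> a < b -> b < 1 -> contp alpha a -> contp alpha b ->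
  forall eps, 0 < eps ->
  Ev (fun be => Rabs (RInt (f be) a b - RInt alpha a b) <= (3/4)^n * ((b - a) * (alpha b - alpha a)) + eps).
Proof.
  induction n as [|n IH]; intros a b Ha Hab Hb Ca Cb eps He.
  - simpl. generalize (pw_base a b Ha Hab Hb Ca Cb eps He). apply Ev_mono. intros; lra.
  - destruct (cont_point alpha Hamon (a + (b - a) / 4) (a + 3 * (b - a) / 4)) as [m [Hm Cm]]; try lra.
    generalize (Ev_and _ _ (Ev_and _ _ (IH a m Ha ltac:(lra) ltac:(lra) Ca Cm (eps/2) ltac:(lra))
                                     (IH m b ltac:(lra) ltac:(lra) Hb Cm Cb (eps/2) ltac:(lra)))
                   (Ev_gt 0)).
    apply Ev_mono. intros be [[H1 H2] Hbe].
    rewrite <- (Chasles_R (f be) a m b); try (apply exf; lra).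
    rewrite <- (Chasles_R alpha a m b); try (apply exa; lra).
    assert (Am : alpha a <= alpha m) by (apply Hamon; lra).
    assert (Bm : alpha m <= alpha b) by (apply Hamon; lra).
    assert (P : 0 <= (3/4)^n) by (apply pow_le; lra).
    assert (K : (m - a) * (alpha m - alpha a) + (b - m) * (alpha b - alpha m)
                <= 3/4 * ((b - a) * (alpha b - alpha a))).
    { assert ((m - a) * (alpha m - alpha a) <= 3/4 * (b - a) * (alpha m - alpha a)) by nra.
      assert ((b - m) * (alpha b - alpha m) <= 3/4 * (b - a) * (alpha b - alpha m)) by nra.
      nra. }
    simpl.
    eapply Rle_trans. 
    { replace (RInt (f be) a m + RInt (f be) m b - (RInt alpha a m + RInt alpha m b))
        with ((RInt (f be) a m - RInt alpha a m) + (RInt (f be) m b - RInt alpha m b)) by ring.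
      apply Rabs_triang. }
    assert ((3/4)^n * ((m - a) * (alpha m - alpha a)) + (3/4)^n * ((b - m) * (alpha b - alpha m))
            <= 3 / 4 * (3 / 4) ^ n * ((b - a) * (alpha b - alpha a))).
    { rewrite <- Rmult_plus_distr_l. 
      replace (3 / 4 * (3 / 4) ^ n * ((b - a) * (alpha b - alpha a))) with
        ((3/4)^n * (3 / 4 * ((b - a) * (alpha b - alpha a)))) by ring.
      apply Rmult_le_compat_l; auto. }
    lra.
Qed.

Lemma pw_cont a b : 0 <= a -> a < b -> b < 1 -> contp alpha a -> contp alpha b ->
  forall eps, 0 < eps ->
  Ev (fun be => Rabs (RInt (f be) a b - RInt alpha a b) < eps).
Proof.
  intros Ha Hab Hb Ca Cb eps He.
  set (V := (b - a) * (alpha b - alpha a)).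
  assert (HV : 0 <= V) by (unfold V; assert (alpha a <= alpha b) by (apply Hamon; lra); nra).
  destruct (pow_lt_1_zero (3/4) ltac:(rewrite Rabs_right; lra) (eps / 2 / (V + 1)))
    as [N HN].
  { apply Rdiv_lt_0_compat; lra. }
  specialize (HN N (le_n N)). rewrite Rabs_right in HN by (apply Rle_ge, pow_le; lra).
  generalize (pw_ind N a b Ha Hab Hb Ca Cb (eps/2) ltac:(lra)). apply Ev_mono.
  intros be H. fold V in H.
  assert ((3/4)^N * V < eps / 2).
  { apply Rle_lt_trans with ((3/4)^N * (V+1)).
    - assert (0 <= (3/4)^N) by (apply pow_le; lra). nra.
    - apply Rmult_lt_reg_r with (/ (V + 1)). apply Rinv_0_lt_compat; lra.
      replace ((3/4)^N * (V + 1) * / (V + 1)) with ((3/4)^N) by (field; lra). exact HN. }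
  lra.
Qed.

Lemma pw q : 0 <= q < 1 -> forall eps, 0 < eps ->
  Ev (fun be => Rabs (RInt (f be) 0 q - RInt alpha 0 q) < eps).
Proof.
  intros Hq eps He.
  destruct (Req_dec q 0) as [Hq0|Hq0].
  { subst q. exists 0. intros x _. rewrite !RInt_point_R. rewrite Rminus_0_r, Rabs_R0. exact He. }
  set (r := (q + 1) / 2).
  set (K := Rabs (alpha 0) + Rabs (alpha r) + 1).
  assert (HK : 1 <= K) by (unfold K; pose proof (Rabs_pos (alpha 0)); pose proof (Rabs_pos (alpha r)); lra).
  assert (HaK : forall s, 0 <= s <= r -> Rabs (alpha s) <= K).
  { intros s Hs. assert (alpha 0 <= alpha s) by (apply Hamon; unfold r in *; lra).
    assert (alpha s <= alpha r) by (apply Hamon; unfold r in *; lra).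
    unfold K. apply Rabs_le. pose proof (proj1 (Rabs_le_between (alpha 0) (Rabs (alpha 0))) (Rle_refl _)).
    pose proof (proj1 (Rabs_le_between (alpha r) (Rabs (alpha r))) (Rle_refl _)).
    pose proof (Rabs_pos (alpha 0)); pose proof (Rabs_pos (alpha r)). lra. }
  set (eta := Rmin (q / 2) (Rmin ((1 - q) / 2) (eps / (8 * (K + 1))))).
  assert (Heta1 : eta <= q / 2) by apply Rmin_l.
  assert (Heta2 : eta <= (1 - q) / 2) by (eapply Rle_trans; [apply Rmin_r| apply Rmin_l]).
  assert (Heta3 : eta <= eps / (8 * (K + 1))) by (eapply Rle_trans; [apply Rmin_r| apply Rmin_r]).
  assert (Heta : 0 < eta).
  { unfold eta. apply Rmin_pos; [lra| apply Rmin_pos; [lra|]]. apply Rdiv_lt_0_compat; lra. }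
  assert (Heta4 : eta * (K + 1) <= eps / 8).
  { apply Rmult_le_reg_r with (/ (K + 1)). apply Rinv_0_lt_compat; lra.
    replace (eta * (K + 1) * / (K + 1)) with eta by (field; lra).
    replace (eps / 8 * / (K + 1)) with (eps / (8 * (K + 1))) by (field; lra). exact Heta3. }
  destruct (cont_point alpha Hamon 0 eta) as [a [Ha Ca]]; try lra.
  destruct (cont_point alpha Hamon q (q + eta)) as [b [Hb Cb]]; try lra.
  generalize (Ev_and _ _ (Ev_and _ _ (pw_cont a b ltac:(lra) ltac:(lra) ltac:(lra) Ca Cb (eps/4) ltac:(lra))
      (Ev_and _ _ (Hconv a ltac:(lra) Ca 1 ltac:(lra)) (Hconv b ltac:(lra) Cb 1 ltac:(lra))))
      (Ev_gt 0)).
  apply Ev_mono. intros be [[H1 [H2 H3]] Hbe].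
  assert (E1 : @eq R (RInt (f be) 0 q) (RInt (f be) 0 a + RInt (f be) a b - RInt (f be) q b)).
  { rewrite <- (Chasles_R (f be) a q b); try (apply exf; lra).
    rewrite <- (Chasles_R (f be) 0 a q); try (apply exf; lra). ring. }
  assert (E2 : @eq R (RInt alpha 0 q) (RInt alpha 0 a + RInt alpha a b - RInt alpha q b)).
  { rewrite <- (Chasles_R alpha a q b); try (apply exa; lra).
    rewrite <- (Chasles_R alpha 0 a q); try (apply exa; lra). ring. }
  rewrite E1, E2.
  destruct (boundf be 0 a Hbe ltac:(lra) ltac:(lra) ltac:(lra)) as [B1 B2].
  destruct (boundf be q b Hbe ltac:(lra) ltac:(lra) ltac:(lra)) as [B3 B4].
  destruct (bounda 0 a ltac:(lra) ltac:(lra) ltac:(lra)) as [B5 B6].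
  destruct (bounda q b ltac:(lra) ltac:(lra) ltac:(lra)) as [B7 B8].
  pose proof (Hfpos be Hbe 0 ltac:(lra)). pose proof (Hfpos be Hbe q ltac:(lra)).
  apply Rabs_lt_between in H2. apply Rabs_lt_between in H3.
  assert (A0 := HaK 0 ltac:(unfold r; lra)). assert (Aa := HaK a ltac:(unfold r; lra)).
  assert (Aq := HaK q ltac:(unfold r; lra)). assert (Ab := HaK b ltac:(unfold r; lra)).
  apply Rabs_le_between in A0. apply Rabs_le_between in Aa.
  apply Rabs_le_between in Aq. apply Rabs_le_between in Ab.
  assert (T1 : 0 <= RInt (f be) 0 a <= eta * (K + 1)).
  { split; [nra|]. assert (f be a <= K + 1) by lra.
    apply Rle_trans with ((a - 0) * f be a); [lra|]. 
    assert (0 <= f be a) by (apply Hfpos; lra). nra. }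
  assert (T2 : 0 <= RInt (f be) q b <= eta * (K + 1)).
  { split; [nra|]. assert (f be b <= K + 1) by lra.
    apply Rle_trans with ((b - q) * f be b); [lra|].
    assert (0 <= f be b) by (apply Hfpos; lra). nra. }
  assert (T3 : Rabs (RInt alpha 0 a) <= eta * (K + 1)).
  { apply Rabs_le. split; nra. }
  assert (T4 : Rabs (RInt alpha q b) <= eta * (K + 1)).
  { apply Rabs_le. split; nra. }
  apply Rabs_lt_between in H1. apply Rabs_le_between in T3. apply Rabs_le_between in T4.
  apply Rabs_lt_between. split; lra.
Qed.

End PW.

Lemma nat_above (r : R) : exists n : nat, r < INR n.
Proof.
  destruct (archimed (Rabs r)) as [H1 H2].
  exists (Z.to_nat (up (Rabs r))).
  assert (0 < up (Rabs r))%Z. { apply lt_IZR. pose proof (Rabs_pos r). lra. }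
  rewrite INR_IZR_INZ, Z2Nat.id by lia. pose proof (Rle_abs r). lra.
Qed.

Section UC.
Variable f : R -> R -> R.
Variable alpha : R -> R.
Hypothesis Hfmon : forall b, 0 < b -> forall s t, 0 <= s -> s <= t -> t <= 1 -> f b s <= f b t.
Hypothesis Hfpos : forall b, 0 < b -> forall s, 0 <= s <= 1 -> 0 <= f b s.
Hypothesis Hamon : forall s t, 0 <= s -> s <= t -> t < 1 -> alpha s <= alpha t.
Hypothesis Hconv : forall s, 0 <= s < 1 -> contp alpha s ->
  forall eps, 0 < eps -> Ev (fun b => Rabs (f b s - alpha s) < eps).

Lemma Fmon b x y : 0 < b -> 0 <= x -> x <= y -> y <= 1 -> RInt (f b) 0 x <= RInt (f b) 0 y.
Proof.
  intros. rewrite <- (Chasles_R (f b) 0 x y); try (apply exf; auto; lra).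
  destruct (boundf f Hfmon b x y); auto.
  assert (0 <= f b x) by (apply Hfpos; lra). nra.
Qed.

Lemma unif c : 0 <= c < 1 -> forall eps, 0 < eps ->
  Ev (fun b => forall q, 0 <= q <= c -> Rabs (RInt (f b) 0 q - RInt alpha 0 q) < eps).
Proof.
  intros Hc eps He.
  set (K := Rabs (alpha 0) + Rabs (alpha c) + 1).
  assert (HK : 1 <= K) by (unfold K; pose proof (Rabs_pos (alpha 0)); pose proof (Rabs_pos (alpha c)); lra).
  assert (Lip : forall x y, 0 <= x -> x <= y -> y <= c ->
    Rabs (RInt alpha 0 y - RInt alpha 0 x) <= K * (y - x)).
  { intros x y Hx Hxy Hy.
    rewrite <- (Chasles_R alpha 0 x y); try (apply exa; auto; lra).
    assert (E : @eq R (RInt alpha 0 x + RInt alpha x y - RInt alpha 0 x) (RInt alpha x y)) by ring. rewrite E.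
    destruct (bounda alpha Hamon x y) as [B1 B2]; try lra.
    assert (alpha 0 <= alpha x) by (apply Hamon; lra).
    assert (alpha y <= alpha c) by (apply Hamon; lra).
    pose proof (proj1 (Rabs_le_between (alpha 0) (Rabs (alpha 0))) (Rle_refl _)).
    pose proof (proj1 (Rabs_le_between (alpha c) (Rabs (alpha c))) (Rle_refl _)).
    apply Rabs_le. unfold K. split; nra. }
  destruct (nat_above (2 * K * c / eps)) as [n Hn].
  assert (Hn1 : (1 <= n)%nat).
  { destruct n; [|lia]. simpl in Hn. assert (0 <= 2 * K * c / eps). 
    { apply Rmult_le_pos; [nra|]. left; apply Rinv_0_lt_compat; lra. } lra. }
  assert (HnR : 1 <= INR n) by (apply (le_INR 1); auto).
  set (h := c / INR n).
  assert (Hh : 0 <= h) by (unfold h; apply Rmult_le_pos; [lra| left; apply Rinv_0_lt_compat; lra]).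
  assert (HKh : K * h < eps / 2).
  { unfold h. apply Rmult_lt_reg_r with (INR n); [lra|].
    replace (K * (c / INR n) * INR n) with (K * c) by (field; lra).
    apply Rmult_lt_reg_r with (2 / eps). apply Rdiv_lt_0_compat; lra.
    replace (eps / 2 * INR n * (2 / eps)) with (INR n) by (field; lra).
    replace (K * c * (2 / eps)) with (2 * K * c / eps) by (field; lra). exact Hn. }
  assert (Hnc : INR n * h = c) by (unfold h; field; lra).
  assert (Claim : forall k, (k <= n)%nat ->
    Ev (fun b => 0 < b /\ forall q, 0 <= q <= INR k * h -> Rabs (RInt (f b) 0 q - RInt alpha 0 q) < eps)).
  { induction k as [|k IH]; intros Hk.
    - exists 0. intros b Hb. split; auto. intros q Hq. simpl in Hq.
      replace q with 0 by lra. rewrite !RInt_point_R. rewrite Rminus_0_r, Rabs_R0. exact He.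
    - assert (Hk1 : INR (S k) * h <= c).
      { rewrite <- Hnc. apply Rmult_le_compat_r; auto. apply le_INR; auto. }
      rewrite S_INR in Hk1.
      assert (0 <= INR k) by apply pos_INR.
      generalize (Ev_and _ _ (IH ltac:(lia))
        (Ev_and _ _ (pw f alpha Hfmon Hfpos Hamon Hconv (INR k * h) ltac:(nra) (eps/2) ltac:(lra))
                    (pw f alpha Hfmon Hfpos Hamon Hconv ((INR k + 1) * h) ltac:(nra) (eps/2) ltac:(lra)))).
      apply Ev_mono. intros b [[Hb H1] [H2 H3]]. split; auto. intros q Hq.
      rewrite S_INR in Hq.
      destruct (Rle_lt_dec q (INR k * h)) as [Hq1|Hq1]; [apply H1; lra|].
      assert (L1 := Lip (INR k * h) q ltac:(nra) ltac:(lra) ltac:(lra)).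
      assert (L2 := Lip q ((INR k + 1) * h) ltac:(nra) ltac:(lra) ltac:(lra)).
      assert (M1 := Fmon b (INR k * h) q Hb ltac:(nra) ltac:(lra) ltac:(lra)).
      assert (M2 := Fmon b q ((INR k + 1) * h) Hb ltac:(nra) ltac:(lra) ltac:(lra)).
      apply Rabs_le_between in L1. apply Rabs_le_between in L2.
      apply Rabs_lt_between in H2. apply Rabs_lt_between in H3.
      assert (K * (q - INR k * h) <= K * h) by (apply Rmult_le_compat_l; lra).
      assert (K * ((INR k + 1) * h - q) <= K * h) by (apply Rmult_le_compat_l; lra).
      apply Rabs_lt_between. split; lra. }
  generalize (Claim n (le_n n)). apply Ev_mono. intros b [_ H] q Hq. apply H. lra.
Qed.
End UC.

Lemma quad_const (H : R -> R) (C a b : R) : a <= b ->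
  (forall x y, a <= x -> x <= y -> y <= b -> Rabs (H y - H x) <= C * (y - x) ^ 2) ->
  H b = H a.
Proof.
  intros Hab HH.
  assert (Hn : forall n : nat, (1 <= n)%nat -> Rabs (H b - H a) <= C * (b - a) ^ 2 / INR n).
  { intros n Hn. assert (HnR : 1 <= INR n) by (apply (le_INR 1); auto).
    set (h := (b - a) / INR n).
    assert (Hh : 0 <= h) by (unfold h; apply Rmult_le_pos; [lra| left; apply Rinv_0_lt_compat; lra]).
    assert (Hnh : INR n * h = b - a) by (unfold h; field; lra).
    assert (Cl : forall k, (k <= n)%nat -> Rabs (H (a + INR k * h) - H a) <= INR k * (C * h ^ 2)).
    { induction k as [|k IH]; intros Hk.
      - simpl. rewrite Rmult_0_l, Rplus_0_r, Rminus_diag, Rabs_R0. lra.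
      - assert (Hk1 : INR (S k) * h <= b - a).
        { rewrite <- Hnh. apply Rmult_le_compat_r; auto. apply le_INR; auto. }
        rewrite S_INR in *. assert (0 <= INR k) by apply pos_INR.
        specialize (IH ltac:(lia)).
        assert (Q := HH (a + INR k * h) (a + (INR k + 1) * h) ltac:(nra) ltac:(nra) ltac:(lra)).
        replace (a + (INR k + 1) * h - (a + INR k * h)) with h in Q by ring.
        eapply Rle_trans.
        { replace (H (a + (INR k + 1) * h) - H a) with
            ((H (a + (INR k + 1) * h) - H (a + INR k * h)) + (H (a + INR k * h) - H a)) by ring.
          apply Rabs_triang. }
        lra. }
    specialize (Cl n (le_n n)). rewrite Hnh in Cl. replace (a + (b - a)) with b in Cl by ring.
    unfold h in Cl. replace (INR n * (C * ((b - a) / INR n) ^ 2)) with (C * (b - a) ^ 2 / INR n) in Cl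
      by (field; lra). exact Cl. }
  destruct (Req_dec (H b - H a) 0) as [E|E]; [lra|].
  exfalso. assert (HD : 0 < Rabs (H b - H a)) by (apply Rabs_pos_lt; auto).
  destruct (nat_above (Rmax 1 (C * (b - a) ^ 2 / Rabs (H b - H a)))) as [n Hn'].
  assert (H1 := Rmax_l 1 (C * (b - a) ^ 2 / Rabs (H b - H a))).
  assert (H2 := Rmax_r 1 (C * (b - a) ^ 2 / Rabs (H b - H a))).
  assert (Hn1 : (1 <= n)%nat). { destruct n; [rewrite INR_0 in Hn'; lra| lia]. }
  specialize (Hn n Hn1). assert (HnR : 1 <= INR n) by (apply (le_INR 1); auto).
  assert (C * (b - a) ^ 2 < Rabs (H b - H a) * INR n).
  { apply Rmult_lt_reg_r with (/ Rabs (H b - H a)). apply Rinv_0_lt_compat; lra.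
    replace (Rabs (H b - H a) * INR n * / Rabs (H b - H a)) with (INR n) by (field; lra).
    unfold Rdiv in H2. lra. }
  assert (Rabs (H b - H a) * INR n <= C * (b - a) ^ 2).
  { apply Rmult_le_reg_r with (/ INR n). apply Rinv_0_lt_compat; lra.
    replace (Rabs (H b - H a) * INR n * / INR n) with (Rabs (H b - H a)) by (field; lra). exact Hn. }
  lra.
Qed.

Section IBP.
Variables w w' f : R -> R.
Variables a b M K : R.
Hypothesis Hab : a <= b.
Hypothesis Hd : forall x, a <= x <= b -> is_derive w x (w' x).
Hypothesis Hc : forall x, a <= x <= b -> continuous w' x.
Hypothesis Hw'b : forall x, a <= x <= b -> Rabs (w' x) <= K.
Hypothesis Hfi : ex_RInt f a b.
Hypothesis Hfb : forall x, a <= x <= b -> Rabs (f x) <= M.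
Hypothesis Hwf : ex_RInt (fun x => w x * f x) a b.
Hypothesis Hw'F : ex_RInt (fun x => w' x * RInt f a x) a b.

Lemma ftc_w x y : a <= x -> x <= y -> y <= b -> RInt w' x y = w y - w x.
Proof.
  intros. apply is_RInt_unique. apply (is_RInt_derive w w' x y).
  - intros t Ht. apply Hd. rewrite Rmin_left, Rmax_right in Ht by lra. lra.
  - intros t Ht. apply Hc. rewrite Rmin_left, Rmax_right in Ht by lra. lra.
Qed.

Lemma exw' x y : a <= x -> x <= y -> y <= b -> ex_RInt w' x y.
Proof. intros. apply (ex_RInt_continuous (V:=R_CompleteNormedModule)). intros t Ht. apply Hc.
  rewrite Rmin_left, Rmax_right in Ht by lra. lra. Qed.

Lemma ibp : RInt (fun x => w x * f x) a b = w b * RInt f a b - RInt (fun x => w' x * RInt f a x) a b.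
Proof.
  set (F := fun x => RInt f a x).
  set (H := fun x => RInt (fun t => w t * f t) a x - w x * F x + RInt (fun t => w' t * F t) a x).
  assert (HK : 0 <= K) by (pose proof (Hw'b a ltac:(lra)); pose proof (Rabs_pos (w' a)); lra).
  assert (HM : 0 <= M) by (pose proof (Hfb a ltac:(lra)); pose proof (Rabs_pos (f a)); lra).
  assert (Q : H b = H a).
  { apply (quad_const H (2 * K * M) a b Hab).
    intros x y Hx Hxy Hy.
    assert (Ef : ex_RInt f x y) by (apply (ex_sub f a b); auto).
    assert (Ewf : ex_RInt (fun t => w t * f t) x y) by (apply (ex_sub _ a b); auto).
    assert (Ew'F : ex_RInt (fun t => w' t * F t) x y) by (apply (ex_sub _ a b); auto).
    assert (Ew' : ex_RInt w' x y) by (apply exw'; auto).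
    assert (C1 : @eq R (RInt (fun t => w t * f t) a y) (RInt (fun t => w t * f t) a x + RInt (fun t => w t * f t) x y)).
    { symmetry. apply Chasles_R; auto. apply (ex_sub _ a b); auto; lra. }
    assert (C2 : @eq R (RInt (fun t => w' t * F t) a y) (RInt (fun t => w' t * F t) a x + RInt (fun t => w' t * F t) x y)).
    { symmetry. apply Chasles_R; auto. apply (ex_sub _ a b); auto; lra. }
    assert (C3 : F y = F x + RInt f x y).
    { unfold F. symmetry. apply Chasles_R; auto. apply (ex_sub _ a b); auto; lra. }
    assert (Wd : w y - w x = RInt w' x y) by (symmetry; apply ftc_w; auto).
    assert (I1 : @eq R (RInt (fun t => (w t - w y) * f t) x y)
                 (RInt (fun t => w t * f t) x y - w y * RInt f x y)).
    { rewrite <- RInt_scal_R by auto. rewrite <- RInt_minus_R; auto.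
      - apply RInt_ext. intros; apply Rminus_diag_uniq; ring.
      - apply (ex_RInt_scal (V:=R_CompleteNormedModule)); auto. }
    assert (I2 : @eq R (RInt (fun t => w' t * (F t - F x)) x y)
                 (RInt (fun t => w' t * F t) x y - F x * RInt w' x y)).
    { rewrite <- RInt_scal_R by auto. rewrite <- RInt_minus_R; auto.
      - apply RInt_ext. intros; apply Rminus_diag_uniq; ring.
      - apply (ex_RInt_scal (V:=R_CompleteNormedModule)); auto. }
    assert (Ex1 : ex_RInt (fun t => (w t - w y) * f t) x y).
    { apply (ex_RInt_ext (fun t => w t * f t - w y * f t)). intros; apply Rminus_diag_uniq; ring.
      apply (ex_RInt_minus (V:=R_CompleteNormedModule)); auto.
      apply (ex_RInt_scal (V:=R_CompleteNormedModule)); auto. }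
    assert (Ex2 : ex_RInt (fun t => w' t * (F t - F x)) x y).
    { apply (ex_RInt_ext (fun t => w' t * F t - F x * w' t)). intros; apply Rminus_diag_uniq; ring.
      apply (ex_RInt_minus (V:=R_CompleteNormedModule)); auto.
      apply (ex_RInt_scal (V:=R_CompleteNormedModule)); auto. }
    assert (B1 : Rabs (RInt (fun t => (w t - w y) * f t) x y) <= (y - x) * (K * (y - x) * M)).
    { apply abs_RInt_le_const; auto. intros t Ht. rewrite Rabs_mult.
      apply Rmult_le_compat; try apply Rabs_pos.
      - rewrite <- Rabs_Ropp. replace (- (w t - w y)) with (w y - w t) by ring.
        rewrite <- ftc_w by lra.
        eapply Rle_trans. apply abs_RInt_le_const. lra. apply exw'; lra.
        intros s Hs. apply Hw'b. lra. nra.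
      - apply Hfb; lra. }
    assert (B2 : Rabs (RInt (fun t => w' t * (F t - F x)) x y) <= (y - x) * (K * (M * (y - x)))).
    { apply abs_RInt_le_const; auto. intros t Ht. rewrite Rabs_mult.
      apply Rmult_le_compat; try apply Rabs_pos.
      - apply Hw'b; lra.
      - replace (F t - F x) with (RInt f x t).
        + eapply Rle_trans. apply abs_RInt_le_const. lra. apply (ex_sub f a b); auto; lra.
          intros s Hs. apply Hfb. lra. nra.
        + unfold F. rewrite <- (Chasles_R f a x t); try (apply (ex_sub f a b); auto; lra). apply Rminus_diag_uniq; ring. }
    assert (E : H y - H x = RInt (fun t => (w t - w y) * f t) x y + RInt (fun t => w' t * (F t - F x)) x y).
    { rewrite I1, I2. unfold H. rewrite C1, C2, C3, <- Wd. ring. }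
    rewrite E. eapply Rle_trans. apply Rabs_triang.
    replace (2 * K * M * (y - x) ^ 2) with ((y - x) * (K * (y - x) * M) + (y - x) * (K * (M * (y - x)))) by ring. lra. }
  assert (Ha : H a = 0).
  { unfold H, F. rewrite (RInt_point_R (fun t => w t * f t) a), (RInt_point_R f a),
      (RInt_point_R (fun t => w' t * RInt f a t) a). ring. }
  rewrite Ha in Q. unfold H, F in Q. unfold F. lra.
Qed.
End IBP.

Definition acoef (gamma : nat -> R) (k : nat) : R := if (k <? 2)%nat then 0 else gamma k ^ 2.

Lemma xi_PS gamma : xi gamma = PSeries (acoef gamma).
Proof.
  apply functional_extensionality. intros s. unfold xi, PSeries. apply Series_ext.
  intros n. unfold xi_term, acoef. destruct (n <? 2)%nat; ring.
Qed.

Lemma acoef_pos gamma n : 0 <= acoef gamma n.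
Proof. unfold acoef. destruct (n <? 2)%nat; [lra|]. apply pow2_ge_0. Qed.

Lemma radius_ge2 gamma :
  ex_series (fun p => if (p <? 2)%nat then 0 else 2 ^ p * (gamma p) ^ 2) ->
  Rbar_le 2 (CV_radius (acoef gamma)).
Proof.
  intros H. destruct (Rbar_lt_le_dec (CV_radius (acoef gamma)) (Rabs 2)) as [Hl|Hl].
  - exfalso. apply (CV_disk_outside _ _ Hl).
    apply ex_series_lim_0. apply ex_series_ext with (2:=H).
    intros n. apply Rminus_diag_uniq. unfold acoef. destruct (n <? 2)%nat; ring.
  - rewrite Rabs_right in Hl by lra. exact Hl.
Qed.

Lemma Rbar_lt_2 (r : Rbar) x : Rbar_le 2 r -> Rabs x < 2 -> Rbar_lt (Rabs x) r.
Proof. intros H1 H2. eapply Rbar_lt_le_trans; [|exact H1]. simpl. exact H2. Qed.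

Lemma PS_derive_pos (d : nat -> R) : (forall n, 0 <= d n) -> forall n, 0 <= PS_derive d n.
Proof. intros H n. unfold PS_derive. apply Rmult_le_pos; [apply pos_INR| apply H]. Qed.

Lemma PS_mono (d : nat -> R) : (forall n, 0 <= d n) -> Rbar_le 2 (CV_radius d) ->
  forall x y, 0 <= x -> x <= y -> y <= 1 -> 0 <= PSeries d x /\ PSeries d x <= PSeries d y.
Proof.
  intros Hd Hr x y Hx Hxy Hy.
  assert (Ey : ex_series (fun k => d k * y ^ k)).
  { apply ex_series_ext with (a := fun k => Rabs (d k * y ^ k)).
    - intros n. rewrite Rabs_right; auto. apply Rle_ge, Rmult_le_pos; auto. apply pow_le; lra.
    - apply CV_disk_inside. apply Rbar_lt_2; auto. rewrite Rabs_right; lra. }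
  assert (Ex : ex_series (fun k => d k * x ^ k)).
  { apply ex_series_ext with (a := fun k => Rabs (d k * x ^ k)).
    - intros n. rewrite Rabs_right; auto. apply Rle_ge, Rmult_le_pos; auto. apply pow_le; lra.
    - apply CV_disk_inside. apply Rbar_lt_2; auto. rewrite Rabs_right; lra. }
  split.
  - rewrite <- (PSeries_const_0 x). unfold PSeries. apply Series_le; auto.
    intros n. split; [lra|]. rewrite Rmult_0_l. apply Rmult_le_pos; auto. apply pow_le; lra.
  - unfold PSeries. apply Series_le; auto.
    intros n. split.
    + apply Rmult_le_pos; auto. apply pow_le; lra.
    + apply Rmult_le_compat_l; auto. apply pow_incr; lra.
Qed.

Section PS.
Variable gamma : nat -> R.
Hypothesis Hgamma : ex_series (fun p => if (p <? 2)%nat then 0 else 2 ^ p * (gamma p) ^ 2).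
Let a := acoef gamma.
Let b := PS_derive a.
Let c := PS_derive b.

Lemma rad_a : Rbar_le 2 (CV_radius a).
Proof. apply radius_ge2; auto. Qed.
Lemma rad_b : Rbar_le 2 (CV_radius b).
Proof. unfold b. rewrite CV_radius_derive. apply rad_a. Qed.
Lemma rad_c : Rbar_le 2 (CV_radius c).
Proof. unfold c. rewrite CV_radius_derive. apply rad_b. Qed.
Lemma pos_a n : 0 <= a n. Proof. apply acoef_pos. Qed.
Lemma pos_b n : 0 <= b n. Proof. apply PS_derive_pos, pos_a. Qed.
Lemma pos_c n : 0 <= c n. Proof. apply PS_derive_pos, pos_b. Qed.

Lemma loc2 (P : R -> Prop) x : Rabs x < 2 -> (forall t, Rabs t < 2 -> P t) -> locally x P.
Proof.
  intros Hx HP. assert (He : 0 < 2 - Rabs x) by lra.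
  exists (mkposreal _ He). intros t Ht. apply HP.
  change (Rabs (t - x) < 2 - Rabs x) in Ht.
  pose proof (Rabs_triang_inv t x). lra.
Qed.

Lemma Dxi x : Rabs x < 2 -> Derive (xi gamma) x = PSeries b x.
Proof. intros Hx. rewrite xi_PS. apply Derive_PSeries. apply Rbar_lt_2; auto. apply rad_a. Qed.

Lemma DDxi x : Rabs x < 2 -> Derive (Derive (xi gamma)) x = PSeries c x.
Proof. intros Hx. rewrite (Derive_ext_loc _ (PSeries b)).
  - apply Derive_PSeries. apply Rbar_lt_2; auto. apply rad_b.
  - apply loc2; auto. apply Dxi.
Qed.

Lemma w_deriv (h : R) x : Rabs x < 2 -> is_derive (fun q => PSeries b q + h ^ 2) x (PSeries c x).
Proof. intros Hx.
  replace (PSeries c x) with (PSeries c x + 0) by ring.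
  apply (is_derive_plus (PSeries b) (fun _ => h^2) x (PSeries c x) 0).
  - apply is_derive_PSeries. apply Rbar_lt_2; auto. apply rad_b.
  - apply (is_derive_const (K:=R_AbsRing) (V:=R_NormedModule)).
Qed.

Lemma c_cont x : Rabs x < 2 -> continuous (PSeries c) x.
Proof. intros Hx. apply continuity_pt_filterlim. apply PSeries_continuity.
  apply Rbar_lt_2; auto. apply rad_c. Qed.

Lemma b_mono x y : 0 <= x -> x <= y -> y <= 1 -> 0 <= PSeries b x /\ PSeries b x <= PSeries b y.
Proof. apply PS_mono. apply pos_b. apply rad_b. Qed.
Lemma c_mono x y : 0 <= x -> x <= y -> y <= 1 -> 0 <= PSeries c x /\ PSeries c x <= PSeries c y.
Proof. apply PS_mono. apply pos_c. apply rad_c. Qed.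
End PS.

Section Xhat.
Variable yy : R -> R.
Hypothesis Hm : forall s t, 0 <= s -> s <= t -> t <= 1 -> yy s <= yy t.
Hypothesis H01 : forall s, 0 <= s <= 1 -> 0 <= yy s <= 1.

Lemma exy x y0 : 0 <= x -> x <= y0 -> y0 <= 1 -> ex_RInt yy x y0.
Proof. intros. apply mono_ex_RInt; auto. intros; apply Hm; lra. Qed.

Lemma xhat_one u q : 0 <= u -> yy u = 1 -> u <= q <= 1 -> xhat yy q = 1 - q.
Proof.
  intros Hu Hyu Hq. unfold xhat. rewrite (RInt_ext yy (fun _ => 1)).
  - rewrite RInt_const_R. apply Rminus_diag_uniq; ring.
  - intros x Hx. rewrite Rmin_left, Rmax_right in Hx by lra.
    assert (yy u <= yy x) by (apply Hm; lra). destruct (H01 x ltac:(lra)). lra.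
Qed.

Lemma xhat_mon x y0 : 0 <= x -> x <= y0 -> y0 <= 1 -> xhat yy y0 <= xhat yy x.
Proof.
  intros. unfold xhat. rewrite <- (Chasles_R yy x y0 1); try (apply exy; lra).
  assert (0 <= RInt yy x y0); [|lra]. apply RInt_ge_0; auto. apply exy; lra.
  intros; apply H01; lra.
Qed.

Lemma xhat_low u q : 0 <= u < 1 -> yy u = 1 -> 0 <= q <= u -> 1 - u <= xhat yy q.
Proof. intros. rewrite <- (xhat_one u u) by (auto; lra). apply xhat_mon; lra. Qed.

Lemma ex_invxhat u : 0 <= u < 1 -> yy u = 1 -> ex_RInt (fun q => / xhat yy q) 0 u.
Proof.
  intros Hu Hyu. apply mono_ex_RInt; [lra|]. intros x y0 Hx Hxy Hy.
  pose proof (xhat_low u x Hu Hyu ltac:(lra)). pose proof (xhat_low u y0 Hu Hyu ltac:(lra)).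
  apply Rinv_le_contravar; [lra|]. apply xhat_mon; lra.
Qed.

Lemma int_inv1 a b : a <= b -> b < 1 -> RInt (fun q => / (1 - q)) a b = ln (1 - a) - ln (1 - b).
Proof.
  intros Hab Hb. apply is_RInt_unique.
  replace (ln (1 - a) - ln (1 - b)) with (minus ((fun q => - ln (1 - q)) b) ((fun q => - ln (1 - q)) a))
    by (unfold minus, plus, opp; simpl; ring).
  apply (is_RInt_derive (fun q => - ln (1 - q)) (fun q => / (1 - q))).
  - intros x Hx. rewrite Rmin_left, Rmax_right in Hx by lra.
    auto_derive. lra. field. lra.
  - intros x Hx. rewrite Rmin_left, Rmax_right in Hx by lra.
    apply (ex_derive_continuous (K:=R_AbsRing) (V:=R_NormedModule)). auto_derive. lra.
Qed.

Lemma Qpart_indep u1 u2 : 0 <= u1 -> u1 <= u2 -> u2 < 1 -> yy u1 = 1 -> yy u2 = 1 ->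
  RInt (fun q => / xhat yy q) 0 u2 + ln (1 - u2) = RInt (fun q => / xhat yy q) 0 u1 + ln (1 - u1).
Proof.
  intros H1 H12 H2 Hy1 Hy2.
  assert (E := ex_invxhat u2 ltac:(lra) Hy2).
  rewrite <- (Chasles_R _ 0 u1 u2); try (apply (ex_sub _ 0 u2); auto; lra).
  rewrite (RInt_ext (fun q => / xhat yy q) (fun q => / (1 - q)) u1 u2).
  - rewrite int_inv1 by lra. ring.
  - intros x Hx. rewrite Rmin_left, Rmax_right in Hx by lra. rewrite (xhat_one u1 x); auto; lra.
Qed.
End Xhat.

Lemma Qat_indep gamma h be yy u1 u2 :
  (forall s t, 0 <= s -> s <= t -> t <= 1 -> yy s <= yy t) ->
  (forall s, 0 <= s <= 1 -> 0 <= yy s <= 1) ->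
  0 <= u1 < 1 -> yy u1 = 1 -> 0 <= u2 < 1 -> yy u2 = 1 ->
  Q_at gamma h be yy u1 = Q_at gamma h be yy u2.
Proof.
  intros Hm H01 Hu1 Hy1 Hu2 Hy2. unfold Q_at.
  destruct (Rle_dec u1 u2).
  - rewrite !Rplus_assoc. rewrite (Qpart_indep yy Hm H01 u1 u2); auto; lra.
  - rewrite !Rplus_assoc. rewrite (Qpart_indep yy Hm H01 u2 u1); auto; lra.
Qed.

Lemma prod_mono (g1 g2 : R -> R) a b :
  (forall x y, a <= x -> x <= y -> y <= b -> g1 x <= g1 y) ->
  (forall x y, a <= x -> x <= y -> y <= b -> g2 x <= g2 y) ->
  (forall x, a <= x <= b -> 0 <= g1 x) -> (forall x, a <= x <= b -> 0 <= g2 x) ->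
  forall x y, a <= x -> x <= y -> y <= b -> g1 x * g2 x <= g1 y * g2 y.
Proof. intros H1 H2 P1 P2 x y Hx Hxy Hy.
  apply Rmult_le_compat; [apply P1; lra| apply P2; lra| apply H1; lra| apply H2; lra]. Qed.

Lemma inv_diff (A B d : R) : 0 < d -> d / 2 <= A -> d <= B ->
  Rabs (/ A - / B) <= Rabs (B - A) * (2 / d) * (1 / d).
Proof.
  intros Hd HA HB.
  replace (/ A - / B) with ((B - A) * (/ A) * (/ B)) by (field; lra).
  rewrite !Rabs_mult. rewrite (Rabs_right (/ A)), (Rabs_right (/ B)).
  2,3: left; apply Rinv_0_lt_compat; lra.
  apply Rmult_le_compat; try (apply Rmult_le_pos); try apply Rabs_pos;
    try (left; apply Rinv_0_lt_compat; lra).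
  apply Rmult_le_compat_l; [apply Rabs_pos|].
  - replace (2 / d) with (/ (d / 2)) by (field; lra). apply Rinv_le_contravar; lra.
  - replace (1 / d) with (/ d) by (field; lra). apply Rinv_le_contravar; lra.
Qed.

Definition sc (y : R -> R -> R) (be s : R) : R := be * y be s.

Section Main.
Variable y : R -> R -> R.
Variable alpha : R -> R.
Variables L delta : R.
Variable v : R -> R.
Hypothesis HyM : forall beta, 0 < beta -> inM (y beta).
Hypothesis Halpha_mono : forall s t, 0 <= s -> s <= t -> t < 1 -> alpha s <= alpha t.
Hypothesis Hvague : vague_cvg y alpha.
Hypothesis HL : is_lim (fun beta => RInt (fun s => beta * y beta s) 0 1) p_infty L.
Hypothesis Hv : forall beta, 0 < beta -> 0 <= v beta < 1 /\ y beta (v beta) = 1.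
Hypothesis Hdelta : is_lim (fun beta => beta * (1 - v beta)) p_infty delta.
Hypothesis Hdelta_pos : 0 < delta.

Let f := sc y.

Lemma y_mon be : 0 < be -> forall s t, 0 <= s -> s <= t -> t <= 1 -> y be s <= y be t.
Proof. intros Hb. destruct (HyM be Hb) as [H _]. exact H. Qed.
Lemma y_01 be : 0 < be -> forall s, 0 <= s <= 1 -> 0 <= y be s <= 1.
Proof. intros Hb. destruct (HyM be Hb) as [_ [H _]]. exact H. Qed.

Lemma f_mon : forall be, 0 < be -> forall s t, 0 <= s -> s <= t -> t <= 1 -> f be s <= f be t.
Proof. intros be Hb s t Hs Hst Ht. unfold f, sc. apply Rmult_le_compat_l; [lra|]. apply y_mon; auto. Qed.
Lemma f_pos : forall be, 0 < be -> forall s, 0 <= s <= 1 -> 0 <= f be s.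
Proof. intros be Hb s Hs. unfold f, sc. apply Rmult_le_pos; [lra|]. apply y_01; auto. Qed.
Lemma f_le : forall be, 0 < be -> forall s, 0 <= s <= 1 -> f be s <= be.
Proof. intros be Hb s Hs. unfold f, sc. destruct (y_01 be Hb s Hs). nra. Qed.

Lemma y_one be : 0 < be -> forall t, v be <= t <= 1 -> y be t = 1.
Proof. intros Hb t Ht. destruct (Hv be Hb) as [H1 H2].
  assert (y be (v be) <= y be t) by (apply y_mon; lra). destruct (y_01 be Hb t ltac:(lra)). lra. Qed.

Lemma f_conv : forall s, 0 <= s < 1 -> contp alpha s ->
  forall eps, 0 < eps -> Ev (fun b => Rabs (f b s - alpha s) < eps).
Proof. intros s Hs Hc eps He. apply (lim_Ev (fun b => b * y b s) _ (Hvague s Hs Hc)); auto. Qed.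

Lemma v_to1 c : c < 1 -> Ev (fun be => c < v be).
Proof.
  intros Hc. generalize (Ev_and _ _ (lim_Ev _ _ Hdelta 1 ltac:(lra)) (Ev_gt ((delta + 1) / (1 - c)))).
  apply Ev_mono. intros be [H1 H2]. apply Rabs_lt_between in H1.
  assert (0 < (delta + 1) / (1 - c)) by (apply Rdiv_lt_0_compat; lra).
  assert (be * (1 - c) > delta + 1).
  { apply Rmult_lt_reg_r with (/ (1 - c)). apply Rinv_0_lt_compat; lra.
    replace (be * (1 - c) * / (1 - c)) with be by (field; lra). unfold Rdiv in H2. lra. }
  nra.
Qed.

Lemma exf1 be x y0 : 0 < be -> 0 <= x -> x <= y0 -> y0 <= 1 -> ex_RInt (f be) x y0.
Proof. intros. apply (exf f f_mon); auto. Qed.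

Lemma Fle be q : 0 < be -> 0 <= q <= v be ->
  RInt (f be) 0 q <= RInt (f be) 0 1 - be * (1 - v be).
Proof.
  intros Hb Hq. destruct (Hv be Hb) as [Hv1 _].
  rewrite <- (Chasles_R (f be) 0 (v be) 1); try (apply exf1; auto; lra).
  rewrite <- (Chasles_R (f be) 0 q (v be)); try (apply exf1; auto; lra).
  assert (E : RInt (f be) (v be) 1 = be * (1 - v be)).
  { rewrite (RInt_ext (f be) (fun _ => be)). rewrite RInt_const_R. apply Rminus_diag_uniq; ring.
    intros x Hx. rewrite Rmin_left, Rmax_right in Hx by lra.
    unfold f, sc. rewrite y_one; auto; lra. }
  destruct (boundf f f_mon be q (v be) Hb) as [B _]; try lra.
  assert (0 <= f be q) by (apply f_pos; lra).
  assert (0 <= (v be - q) * f be q) by nra. lra.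
Qed.

Lemma alpha_nonneg s : 0 < s < 1 -> 0 <= alpha s.
Proof.
  intros Hs. destruct (cont_point alpha Halpha_mono 0 s) as [s' [Hs' C]]; try lra.
  assert (alpha s' <= alpha s) by (apply Halpha_mono; lra).
  assert (0 <= alpha s'); [|lra].
  apply Rnot_lt_le. intro Hn.
  destruct (Ev_and _ _ (f_conv s' ltac:(lra) C (- alpha s') ltac:(lra)) (Ev_gt 0)) as [M HM].
  destruct (HM (Rmax M 0 + 1)) as [H1 H2]. pose proof (Rmax_l M 0); lra.
  assert (0 <= f (Rmax M 0 + 1) s') by (apply f_pos; auto; lra).
  apply Rabs_lt_between in H1. lra.
Qed.

Lemma exa1 x y0 : 0 <= x -> x <= y0 -> y0 < 1 -> ex_RInt alpha x y0.
Proof. intros. apply (exa alpha Halpha_mono); auto. Qed.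

Lemma Fa_mon x y0 : 0 <= x -> x <= y0 -> y0 < 1 -> RInt alpha 0 x <= RInt alpha 0 y0.
Proof.
  intros. rewrite <- (Chasles_R alpha 0 x y0); try (apply exa1; lra).
  assert (0 <= RInt alpha x y0); [|lra].
  apply RInt_ge_0; auto. apply exa1; lra. intros; apply alpha_nonneg; lra.
Qed.

Lemma Fa_pos q : 0 <= q < 1 -> 0 <= RInt alpha 0 q.
Proof. intros. pose proof (Fa_mon 0 q ltac:(lra) ltac:(lra) ltac:(lra)). rewrite RInt_point_R in H0. exact H0. Qed.

Lemma Fa_le q : 0 <= q < 1 -> RInt alpha 0 q <= L - delta.
Proof.
  intros Hq. apply Rnot_lt_le. intro Hn.
  set (e := (RInt alpha 0 q - (L - delta)) / 3).
  assert (He : 0 < e) by (unfold e; lra).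
  destruct (Ev_and _ _ (Ev_and _ _ (pw f alpha f_mon f_pos Halpha_mono f_conv q Hq e He)
             (lim_Ev _ _ HL e He))
           (Ev_and _ _ (lim_Ev _ _ Hdelta e He) (Ev_and _ _ (v_to1 q ltac:(lra)) (Ev_gt 0))))
    as [M HM].
  destruct (HM (Rmax M 0 + 1)) as [[H1 H2] [H3 [H4 H5]]]. pose proof (Rmax_l M 0); lra.
  set (be := Rmax M 0 + 1) in *.
  assert (F := Fle be q H5 ltac:(lra)).
  apply Rabs_lt_between in H1. apply Rabs_lt_between in H2. apply Rabs_lt_between in H3.
  unfold f in F, H1. unfold sc in *. unfold e in *. lra.
Qed.

Lemma L_ge : delta <= L.
Proof. pose proof (Fa_le 0 ltac:(lra)). rewrite RInt_point_R in H. lra. Qed.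

Definition Fat (q : R) : R := if Rlt_dec q 1 then RInt alpha 0 q else L - delta.

Lemma Fat_mon x y0 : 0 <= x -> x <= y0 -> y0 <= 1 -> Fat x <= Fat y0.
Proof. intros. unfold Fat. destruct (Rlt_dec y0 1); destruct (Rlt_dec x 1); try lra.
  - apply Fa_mon; lra.
  - apply Fa_le; lra. Qed.

Lemma Fat_bnd x : 0 <= x <= 1 -> 0 <= Fat x <= L - delta.
Proof. intros. unfold Fat. destruct (Rlt_dec x 1).
  - split; [apply Fa_pos| apply Fa_le]; lra.
  - pose proof L_ge. lra. Qed.


Lemma F_mon be x y0 : 0 < be -> 0 <= x -> x <= y0 -> y0 <= 1 -> RInt (f be) 0 x <= RInt (f be) 0 y0.
Proof. intros. apply (Fmon f f_mon f_pos); auto. Qed.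

Lemma F_pos be x : 0 < be -> 0 <= x <= 1 -> 0 <= RInt (f be) 0 x.
Proof. intros. pose proof (F_mon be 0 x H ltac:(lra) ltac:(lra) ltac:(lra)).
  rewrite RInt_point_R in H1. exact H1. Qed.

Lemma ex_wF (w' : R -> R) be :
  (forall x, 0 <= x <= 1 -> 0 <= w' x) ->
  (forall x y0, 0 <= x -> x <= y0 -> y0 <= 1 -> w' x <= w' y0) -> 0 < be ->
  ex_RInt (fun q => w' q * RInt (f be) 0 q) 0 1.
Proof.
  intros Hp Hm Hb. apply mono_ex_RInt; [lra|]. apply prod_mono; auto.
  - intros; apply F_mon; auto.
  - intros; apply F_pos; auto.
Qed.

Lemma ex_wFa (w' : R -> R) :
  (forall x, 0 <= x <= 1 -> 0 <= w' x) ->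
  (forall x y0, 0 <= x -> x <= y0 -> y0 <= 1 -> w' x <= w' y0) ->
  ex_RInt (fun q => w' q * RInt alpha 0 q) 0 1.
Proof.
  intros Hp Hm. apply (ex_RInt_ext (fun q => w' q * Fat q)).
  - intros x Hx. rewrite Rmin_left, Rmax_right in Hx by lra. unfold Fat.
    destruct (Rlt_dec x 1); [reflexivity| lra].
  - apply mono_ex_RInt; [lra|]. apply prod_mono; auto.
    + intros; apply Fat_mon; auto.
    + intros; apply Fat_bnd; auto.
Qed.

Lemma convJ1 (w' : R -> R) :
  (forall x, 0 <= x <= 1 -> 0 <= w' x) ->
  (forall x y0, 0 <= x -> x <= y0 -> y0 <= 1 -> w' x <= w' y0) ->
  forall eps, 0 < eps -> Ev (fun be =>
    Rabs (RInt (fun q => w' q * RInt (f be) 0 q) 0 1 - RInt (fun q => w' q * RInt alpha 0 q) 0 1) < eps).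
Proof.
  intros Hp Hm eps He.
  set (K := w' 1). assert (HK : 0 <= K) by (apply Hp; lra).
  assert (HwK : forall x, 0 <= x <= 1 -> Rabs (w' x) <= K).
  { intros x Hx. rewrite Rabs_right by (apply Rle_ge, Hp; lra). apply Hm; lra. }
  pose proof L_ge as HLd.
  set (B := L + 1).
  set (eta := Rmin (1/2) (eps / (4 * (K + 1) * (B + 1)))).
  assert (Heta1 : eta <= 1/2) by apply Rmin_l.
  assert (Heta2 : eta <= eps / (4 * (K + 1) * (B + 1))) by apply Rmin_r.
  assert (Heta : 0 < eta).
  { unfold eta. apply Rmin_pos; [lra|]. apply Rdiv_lt_0_compat; [lra|]. unfold B. nra. }
  assert (HetaKB : eta * K * B <= eps / 4).
  { assert (eta * ((K + 1) * (B + 1)) <= eps / 4).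
    { apply Rmult_le_reg_r with (/ ((K + 1) * (B + 1))). apply Rinv_0_lt_compat; unfold B; nra.
      replace (eta * ((K + 1) * (B + 1)) * / ((K + 1) * (B + 1))) with eta by (field; unfold B; nra).
      replace (eps / 4 * / ((K + 1) * (B + 1))) with (eps / (4 * (K + 1) * (B + 1)))
        by (field; unfold B; nra). exact Heta2. }
    assert (eta * K * B <= eta * ((K + 1) * (B + 1))).
    { rewrite Rmult_assoc. apply Rmult_le_compat_l; [lra|]. unfold B. nra. }
    lra. }
  set (c := 1 - eta).
  set (e1 := eps / (4 * (K + 1))).
  assert (He1 : 0 < e1) by (unfold e1; apply Rdiv_lt_0_compat; lra).
  generalize (Ev_and _ _ (unif f alpha f_mon f_pos Halpha_mono f_conv c ltac:(unfold c; lra) e1 He1)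
               (Ev_and _ _ (lim_Ev _ _ HL 1 ltac:(lra)) (Ev_gt 0))).
  apply Ev_mono. intros be [HU [HI Hb]].
  apply Rabs_lt_between in HI. fold (f be) in HI.
  change (fun s => be * y be s) with (f be) in HI.
  assert (E1 := ex_wF w' be Hp Hm Hb).
  assert (E2 := ex_wFa w' Hp Hm).
  rewrite <- (Chasles_R _ 0 c 1); try (apply (ex_sub _ 0 1); auto; unfold c; lra).
  rewrite <- (Chasles_R (fun q => w' q * RInt alpha 0 q) 0 c 1); try (apply (ex_sub _ 0 1); auto; unfold c; lra).
  assert (A1 : Rabs (RInt (fun q => w' q * RInt (f be) 0 q) 0 c - RInt (fun q => w' q * RInt alpha 0 q) 0 c)
               <= c * (K * e1)).
  { rewrite <- RInt_minus_R; try (apply (ex_sub _ 0 1); auto; unfold c; lra).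
    replace c with (c - 0) at 2 by ring.
    apply abs_RInt_le_const; [unfold c; lra| |].
    - apply (ex_RInt_minus (V:=R_CompleteNormedModule)); apply (ex_sub _ 0 1); auto; unfold c; lra.
    - intros t Ht. replace (w' t * RInt (f be) 0 t - w' t * RInt alpha 0 t) with
        (w' t * (RInt (f be) 0 t - RInt alpha 0 t)) by ring.
      rewrite Rabs_mult. apply Rmult_le_compat; try apply Rabs_pos.
      + apply HwK; unfold c in *; lra.
      + left; apply HU; lra. }
  assert (A2 : Rabs (RInt (fun q => w' q * RInt (f be) 0 q) c 1) <= (1 - c) * (K * B)).
  { apply abs_RInt_le_const; [unfold c; lra| apply (ex_sub _ 0 1); auto; unfold c; lra|].
    intros t Ht. rewrite Rabs_mult. apply Rmult_le_compat; try apply Rabs_pos.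
    + apply HwK; unfold c in *; lra.
    + rewrite Rabs_right by (apply Rle_ge, F_pos; unfold c in *; lra).
      assert (RInt (f be) 0 t <= RInt (f be) 0 1) by (apply F_mon; unfold c in *; lra).
      unfold B. lra. }
  assert (A3 : Rabs (RInt (fun q => w' q * RInt alpha 0 q) c 1) <= (1 - c) * (K * B)).
  { apply abs_RInt_open; [unfold c; lra| apply (ex_sub _ 0 1); auto; unfold c; lra|].
    intros t Ht. rewrite Rabs_mult. apply Rmult_le_compat; try apply Rabs_pos.
    + apply HwK; unfold c in *; lra.
    + rewrite Rabs_right by (apply Rle_ge, Fa_pos; unfold c in *; lra).
      assert (RInt alpha 0 t <= L - delta) by (apply Fa_le; unfold c in *; lra).
      unfold B. lra. }
  assert (c * (K * e1) < eps / 4 + eps / 4).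
  { assert (K * e1 <= eps / 4).
    { unfold e1. apply Rmult_le_reg_r with (4 * (K + 1)); [lra|].
      replace (K * (eps / (4 * (K + 1))) * (4 * (K + 1))) with (K * eps) by (field; lra). nra. }
    assert (0 <= K * e1) by (apply Rmult_le_pos; lra).
    assert (c <= 1) by (unfold c; lra). assert (0 <= c) by (unfold c; lra). nra. }
  replace (1 - c) with eta in A2, A3 by (unfold c; ring).
  apply Rabs_le_between in A1. apply Rabs_le_between in A2. apply Rabs_le_between in A3.
  apply Rabs_lt_between. split; nra.
Qed.

Lemma convJ2 : forall eps, 0 < eps -> Ev (fun be =>
  Rabs (RInt (fun q => / (RInt (f be) 0 1 - RInt (f be) 0 q)) 0 (v be)
        - RInt (fun q => / (L - RInt alpha 0 q)) 0 1) < eps).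
Proof.
  intros eps He.
  pose proof L_ge as HLd.
  set (eta := Rmin (1/2) (eps * delta / 12)).
  assert (Heta1 : eta <= 1/2) by apply Rmin_l.
  assert (Heta2 : eta <= eps * delta / 12) by apply Rmin_r.
  assert (Heta : 0 < eta) by (unfold eta; apply Rmin_pos; nra).
  set (c := 1 - eta).
  set (e1 := eps * delta ^ 2 / 16).
  assert (He1 : 0 < e1) by (unfold e1; nra).
  generalize (Ev_and _ _ (unif f alpha f_mon f_pos Halpha_mono f_conv c ltac:(unfold c; lra) e1 He1)
               (Ev_and _ _ (lim_Ev _ _ HL e1 He1)
                 (Ev_and _ _ (lim_Ev _ _ Hdelta (delta/2) ltac:(lra))
                    (Ev_and _ _ (v_to1 c ltac:(unfold c; lra)) (Ev_gt 0))))).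
  apply Ev_mono. intros be [HU [HI [Hd [Hvc Hb]]]].
  change (fun s => be * y be s) with (f be) in HI.
  apply Rabs_lt_between in HI. apply Rabs_lt_between in Hd.
  destruct (Hv be Hb) as [Hv1 _].
  set (I := RInt (f be) 0 1) in *.
  assert (Pos : forall q, 0 <= q <= v be -> delta / 2 <= I - RInt (f be) 0 q).
  { intros q Hq. pose proof (Fle be q Hb Hq). fold I in H. lra. }
  assert (Ephi : ex_RInt (fun q => / (I - RInt (f be) 0 q)) 0 (v be)).
  { apply mono_ex_RInt; [lra|]. intros x y0 Hx Hxy Hy.
    pose proof (Pos x ltac:(lra)). pose proof (Pos y0 ltac:(lra)).
    apply Rinv_le_contravar; [lra|]. assert (RInt (f be) 0 x <= RInt (f be) 0 y0) by (apply F_mon; lra). lra. }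
  assert (Epsi : ex_RInt (fun q => / (L - RInt alpha 0 q)) 0 1).
  { apply (ex_RInt_ext (fun q => / (L - Fat q))).
    - intros x Hx. rewrite Rmin_left, Rmax_right in Hx by lra. unfold Fat.
      destruct (Rlt_dec x 1); [reflexivity| lra].
    - apply mono_ex_RInt; [lra|]. intros x y0 Hx Hxy Hy.
      pose proof (Fat_bnd x ltac:(lra)). pose proof (Fat_bnd y0 ltac:(lra)).
      apply Rinv_le_contravar; [lra|]. pose proof (Fat_mon x y0 Hx Hxy Hy). lra. }
  rewrite <- (Chasles_R _ 0 c (v be)); try (apply (ex_sub _ 0 (v be)); auto; unfold c in *; lra).
  rewrite <- (Chasles_R (fun q => / (L - RInt alpha 0 q)) 0 c 1); try (apply (ex_sub _ 0 1); auto; unfold c; lra).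
  assert (A1 : Rabs (RInt (fun q => / (I - RInt (f be) 0 q)) 0 c - RInt (fun q => / (L - RInt alpha 0 q)) 0 c)
               <= c * (2 * e1 * (2 / delta) * (1 / delta))).
  { rewrite <- RInt_minus_R; try (apply (ex_sub _ 0 (v be)); auto; unfold c in *; lra);
      try (apply (ex_sub _ 0 1); auto; unfold c; lra).
    replace c with (c - 0) at 2 by ring.
    apply abs_RInt_le_const; [unfold c; lra| |].
    - apply (ex_RInt_minus (V:=R_CompleteNormedModule)).
      apply (ex_sub _ 0 (v be)); auto; unfold c in *; lra. apply (ex_sub _ 0 1); auto; unfold c; lra.
    - intros t Ht. eapply Rle_trans. apply inv_diff. exact Hdelta_pos.
      + apply Pos. unfold c in *; lra.
      + pose proof (Fa_le t ltac:(unfold c in *; lra)). lra.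
      + apply Rmult_le_compat_r. unfold Rdiv; rewrite Rmult_1_l; left; apply Rinv_0_lt_compat; lra.
        apply Rmult_le_compat_r. left; apply Rdiv_lt_0_compat; lra.
        assert (HUt := HU t ltac:(unfold c in *; lra)). apply Rabs_lt_between in HUt.
        apply Rabs_le. lra. }
  assert (A2 : Rabs (RInt (fun q => / (I - RInt (f be) 0 q)) c (v be)) <= (v be - c) * (2 / delta)).
  { apply abs_RInt_le_const; [unfold c in *; lra| apply (ex_sub _ 0 (v be)); auto; unfold c in *; lra|].
    intros t Ht. pose proof (Pos t ltac:(unfold c in *; lra)).
    rewrite Rabs_right by (left; apply Rinv_0_lt_compat; lra).
    replace (2 / delta) with (/ (delta / 2)) by (field; lra). apply Rinv_le_contravar; lra. }
  assert (A3 : Rabs (RInt (fun q => / (L - RInt alpha 0 q)) c 1) <= (1 - c) * (1 / delta)).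
  { apply abs_RInt_open; [unfold c; lra| apply (ex_sub _ 0 1); auto; unfold c; lra|].
    intros t Ht. pose proof (Fa_le t ltac:(unfold c in *; lra)).
    rewrite Rabs_right by (left; apply Rinv_0_lt_compat; lra).
    replace (1 / delta) with (/ delta) by (field; lra). apply Rinv_le_contravar; lra. }
  assert (X1 : c * (2 * e1 * (2 / delta) * (1 / delta)) <= eps / 4).
  { replace (2 * e1 * (2 / delta) * (1 / delta)) with (eps / 4) by (unfold e1; field; lra).
    assert (c <= 1) by (unfold c; lra). assert (0 <= c) by (unfold c; lra). nra. }
  assert (X2 : (v be - c) * (2 / delta) + (1 - c) * (1 / delta) <= eps / 4).
  { replace ((v be - c) * (2 / delta) + (1 - c) * (1 / delta)) with ((2 * (v be - c) + (1 - c)) / delta)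
      by (field; lra).
    apply Rmult_le_reg_r with delta; [lra|].
    replace ((2 * (v be - c) + (1 - c)) / delta * delta) with (2 * (v be - c) + (1 - c)) by (field; lra).
    unfold c in *. nra. }
  apply Rabs_le_between in A1. apply Rabs_le_between in A2. apply Rabs_le_between in A3.
  apply Rabs_lt_between. split; lra.
Qed.

Lemma convT3 : forall eps, 0 < eps -> Ev (fun be => Rabs (ln (1 - v be) / be) < eps).
Proof.
  intros eps He.
  set (Kl := Rabs (ln (delta / 2)) + Rabs (ln (3 * delta / 2))).
  assert (HKl : 0 <= Kl) by (unfold Kl; pose proof (Rabs_pos (ln (delta/2))); pose proof (Rabs_pos (ln (3*delta/2))); lra).
  generalize (Ev_and _ _ (lim_Ev _ _ Hdelta (delta/2) ltac:(lra))
     (Ev_and _ _ (lim_Ev _ _ is_lim_div_ln_p (eps/2) ltac:(lra))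
        (Ev_and _ _ (Ev_gt (2 * Kl / eps)) (Ev_gt 1)))).
  apply Ev_mono. intros be [Hd [Hln [Hb1 Hb2]]].
  apply Rabs_lt_between in Hd. rewrite Rminus_0_r in Hln.
  destruct (Hv be ltac:(lra)) as [Hv1 _].
  assert (Hpos : 0 < be * (1 - v be)) by lra.
  assert (E : ln (1 - v be) = ln (be * (1 - v be)) - ln be).
  { rewrite <- ln_div by lra. f_equal. field. lra. }
  assert (Bl : Rabs (ln (be * (1 - v be))) <= Kl).
  { assert (ln (delta / 2) <= ln (be * (1 - v be))) by (apply ln_le; lra).
    assert (ln (be * (1 - v be)) <= ln (3 * delta / 2)) by (apply ln_le; lra).
    unfold Kl. pose proof (proj1 (Rabs_le_between (ln (delta/2)) _) (Rle_refl _)).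
    pose proof (proj1 (Rabs_le_between (ln (3*delta/2)) _) (Rle_refl _)).
    pose proof (Rabs_pos (ln (delta/2))); pose proof (Rabs_pos (ln (3*delta/2))).
    apply Rabs_le. lra. }
  rewrite E. replace ((ln (be * (1 - v be)) - ln be) / be) with (ln (be * (1 - v be)) / be - ln be / be)
    by (field; lra).
  eapply Rle_lt_trans. apply Rabs_triang. rewrite Rabs_Ropp.
  assert (Rabs (ln (be * (1 - v be)) / be) < eps / 2).
  { unfold Rdiv. rewrite Rabs_mult. rewrite (Rabs_right (/ be)) by (left; apply Rinv_0_lt_compat; lra).
    apply Rle_lt_trans with (Kl * / be).
    - apply Rmult_le_compat_r; [left; apply Rinv_0_lt_compat; lra| exact Bl].
    - apply Rmult_lt_reg_r with be; [lra|]. rewrite Rmult_assoc, Rinv_l by lra.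
      unfold Rdiv in Hb1. 
      assert (2 * Kl * / eps * eps = 2 * Kl) by (field; lra). nra. }
  lra.
Qed.

Lemma convT1 (w w' : R -> R) :
  (forall x, 0 <= x <= 1 -> is_derive w x (w' x)) ->
  (forall x, 0 <= x <= 1 -> continuous w' x) ->
  (forall x, 0 <= x <= 1 -> 0 <= w x) ->
  (forall x y0, 0 <= x -> x <= y0 -> y0 <= 1 -> w x <= w y0) ->
  (forall x, 0 <= x <= 1 -> 0 <= w' x) ->
  (forall x y0, 0 <= x -> x <= y0 -> y0 <= 1 -> w' x <= w' y0) ->
  forall eps, 0 < eps -> Ev (fun be =>
    Rabs (RInt (fun q => w q * f be q) 0 1 - (w 1 * L - RInt (fun q => w' q * RInt alpha 0 q) 0 1)) < eps).
Proof.
  intros Hd Hc Hwp Hwm Hw'p Hw'm eps He.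
  assert (Hw1 : 0 <= w 1) by (apply Hwp; lra).
  set (e2 := eps / (2 * (w 1 + 1))).
  assert (He2 : 0 < e2) by (unfold e2; apply Rdiv_lt_0_compat; lra).
  generalize (Ev_and _ _ (convJ1 w' Hw'p Hw'm (eps/2) ltac:(lra))
     (Ev_and _ _ (lim_Ev _ _ HL e2 He2) (Ev_gt 0))).
  apply Ev_mono. intros be [HJ [HI Hb]].
  change (fun s => be * y be s) with (f be) in HI.
  rewrite (ibp w w' (f be) 0 1 be (w' 1)); try lra; auto.
  - assert (w 1 * Rabs (RInt (f be) 0 1 - L) <= w 1 * e2) by (apply Rmult_le_compat_l; lra).
    assert (w 1 * e2 < eps / 2).
    { unfold e2. apply Rmult_lt_reg_r with (2 * (w 1 + 1)); [lra|].
      replace (w 1 * (eps / (2 * (w 1 + 1))) * (2 * (w 1 + 1))) with (w 1 * eps) by (field; lra).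
      nra. }
    replace (w 1 * RInt (f be) 0 1 - RInt (fun x : R => w' x * RInt (f be) 0 x) 0 1 -
             (w 1 * L - RInt (fun q : R => w' q * RInt alpha 0 q) 0 1)) with
      (w 1 * (RInt (f be) 0 1 - L) - (RInt (fun x : R => w' x * RInt (f be) 0 x) 0 1 - RInt (fun q : R => w' q * RInt alpha 0 q) 0 1)) by ring.
    eapply Rle_lt_trans. apply Rabs_triang. rewrite Rabs_Ropp, Rabs_mult, (Rabs_right (w 1)) by lra.
    lra.
  - intros x Hx. rewrite Rabs_right by (apply Rle_ge, Hw'p; lra). apply Hw'm; lra.
  - apply exf1; lra.
  - intros x Hx. rewrite Rabs_right by (apply Rle_ge, f_pos; lra). apply f_le; lra.
  - apply mono_ex_RInt; [lra|]. apply prod_mono; auto.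
    + intros; apply f_mon; auto.
    + intros; apply f_pos; auto.
  - apply ex_wF; auto.
Qed.

Lemma ex_phi be : 0 < be -> ex_RInt (fun q => / (RInt (f be) 0 1 - RInt (f be) 0 q)) 0 (v be).
Proof.
  intros Hb. destruct (Hv be Hb) as [Hv1 _].
  assert (Pos : forall q, 0 <= q <= v be -> 0 < RInt (f be) 0 1 - RInt (f be) 0 q).
  { intros q Hq. pose proof (Fle be q Hb Hq). assert (0 < be * (1 - v be)) by nra. lra. }
  apply mono_ex_RInt; [lra|]. intros x y0 Hx Hxy Hy.
  pose proof (Pos x ltac:(lra)). pose proof (Pos y0 ltac:(lra)).
  apply Rinv_le_contravar; [lra|]. assert (RInt (f be) 0 x <= RInt (f be) 0 y0) by (apply F_mon; lra). lra.
Qed.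

Lemma Qform gamma h :
  ex_series (fun p => if (p <? 2)%nat then 0 else 2 ^ p * (gamma p) ^ 2) ->
  forall be, 0 < be ->
  Q gamma h be (y be) / be =
  / 2 * (RInt (fun q => (PSeries (PS_derive (acoef gamma)) q + h ^ 2) * f be q) 0 1
         + RInt (fun q => / (RInt (f be) 0 1 - RInt (f be) 0 q)) 0 (v be)
         + ln (1 - v be) / be).
Proof.
  intros Hg be Hb.
  destruct (Hv be Hb) as [Hv1 Hv2].
  assert (Hq : Q gamma h be (y be) = Q_at gamma h be (y be) (v be)).
  { unfold Q. apply Qat_indep; auto.
    - intros; apply y_mon; auto.
    - intros; apply y_01; auto.
    - unfold choose_qh. apply (epsilon_spec (inhabits 0) (fun qh => 0 <= qh < 1 /\ y be qh = 1)).
      exists (v be); auto.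
    - unfold choose_qh. apply (epsilon_spec (inhabits 0) (fun qh => 0 <= qh < 1 /\ y be qh = 1)).
      exists (v be); auto. }
  rewrite Hq. unfold Q_at.
  set (b := PS_derive (acoef gamma)).
  assert (R1 : RInt (fun q => (Derive (xi_beta gamma be) q + h_beta h be ^ 2) * y be q) 0 1
             = be * RInt (fun q => (PSeries b q + h ^ 2) * f be q) 0 1).
  { rewrite <- RInt_scal_R.
    - apply RInt_ext. intros x Hx. rewrite Rmin_left, Rmax_right in Hx by lra.
      unfold xi_beta. rewrite Derive_scal. rewrite Dxi by (auto; rewrite Rabs_right; lra).
      unfold h_beta, f, sc. fold b. apply Rminus_diag_uniq. ring.
    - apply mono_ex_RInt; [lra|]. apply prod_mono.
      + intros x y0 Hx Hxy Hy. destruct (b_mono gamma Hg x y0); auto. unfold b. lra.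
      + intros; apply f_mon; auto.
      + intros x Hx. destruct (b_mono gamma Hg x x); try lra. pose proof (pow2_ge_0 h). unfold b. lra.
      + intros; apply f_pos; auto. }
  assert (R2 : RInt (fun q => / xhat (y be) q) 0 (v be)
             = be * RInt (fun q => / (RInt (f be) 0 1 - RInt (f be) 0 q)) 0 (v be)).
  { rewrite <- RInt_scal_R by (apply ex_phi; auto).
    apply RInt_ext. intros x Hx. rewrite Rmin_left, Rmax_right in Hx by lra.
    assert (E : RInt (f be) 0 1 - RInt (f be) 0 x = be * xhat (y be) x).
    { unfold xhat. rewrite <- (Chasles_R (f be) 0 x 1); try (apply exf1; lra).
      unfold f, sc. rewrite (RInt_scal_R (y be) x 1). apply Rminus_diag_uniq; ring.
      apply (exy (y be)); try lra; intros; first [apply y_mon; auto; lra | apply y_01; auto; lra]. }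
    rewrite E.
    pose proof (Fle be x Hb ltac:(lra)). assert (0 < be * (1 - v be)) by nra.
    assert (0 < be * xhat (y be) x) by lra.
    assert (xhat (y be) x <> 0) by (intro Hz; rewrite Hz in H1; lra).
    apply Rminus_diag_uniq. field. split; lra. }
  rewrite R1, R2. field. lra.
Qed.

Lemma main_sec gamma h :
  ex_series (fun p => if (p <? 2)%nat then 0 else 2 ^ p * (gamma p) ^ 2) ->
  is_lim (fun beta => Q gamma h beta (y beta) / beta) p_infty
    (/ 2 * ( (Derive (xi gamma) 1 + h ^ 2) * L
           - RInt (fun q => Derive (Derive (xi gamma)) q * RInt alpha 0 q) 0 1
           + RInt (fun q => / (L - RInt alpha 0 q)) 0 1 )).
Proof.
  intros Hg.
  set (b := PS_derive (acoef gamma)). set (c := PS_derive b).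
  rewrite (Dxi gamma Hg 1) by (rewrite Rabs_right; lra).
  rewrite (RInt_ext (fun q => Derive (Derive (xi gamma)) q * RInt alpha 0 q) (fun q => PSeries c q * RInt alpha 0 q)).
  2:{ intros x Hx. rewrite Rmin_left, Rmax_right in Hx by lra. rewrite DDxi; auto.
      rewrite Rabs_right; lra. }
  apply Ev_lim. intros eps He.
  set (w := fun q => PSeries b q + h ^ 2).
  assert (T1 := convT1 w (PSeries c)).
  specialize (T1 ltac:(intros x Hx; apply w_deriv; auto; rewrite Rabs_right; lra)).
  specialize (T1 ltac:(intros x Hx; apply c_cont; auto; rewrite Rabs_right; lra)).
  specialize (T1 ltac:(intros x Hx; unfold w, b; destruct (b_mono gamma Hg x x); try lra; pose proof (pow2_ge_0 h); lra)).
  specialize (T1 ltac:(intros x y0 Hx Hxy Hy; unfold w, b; destruct (b_mono gamma Hg x y0); auto; lra)).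
  specialize (T1 ltac:(intros x Hx; unfold c, b; destruct (c_mono gamma Hg x x); try lra)).
  specialize (T1 ltac:(intros x y0 Hx Hxy Hy; unfold c, b; destruct (c_mono gamma Hg x y0); auto; lra)).
  generalize (Ev_and _ _ (T1 (eps/2) ltac:(lra))
     (Ev_and _ _ (convJ2 (eps/2) ltac:(lra)) (Ev_and _ _ (convT3 (eps/2) ltac:(lra)) (Ev_gt 0)))).
  apply Ev_mono. intros be [H1 [H2 [H3 Hb]]].
  rewrite (Qform gamma h Hg be Hb). fold b.
  unfold w in H1.
  apply Rabs_lt_between in H1. apply Rabs_lt_between in H2. apply Rabs_lt_between in H3.
  apply Rabs_lt_between. split; lra.
Qed.

End Main.

Theorem lemma5 (gamma : nat -> R) (h : R)
  (Hgamma : ex_series (fun p => if (p <? 2)%nat then 0 else 2 ^ p * (gamma p) ^ 2))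
  (y : R -> R -> R) (alpha : R -> R) (L delta : R) (v : R -> R)
  (HyM : forall beta, 0 < beta -> inM (y beta))
  (Halpha_mono : forall s t, 0 <= s -> s <= t -> t < 1 -> alpha s <= alpha t)
  (Hvague : vague_cvg y alpha)
  (HL : is_lim (fun beta => RInt (fun s => beta * y beta s) 0 1) p_infty L)
  (Hv : forall beta, 0 < beta -> 0 <= v beta < 1 /\ y beta (v beta) = 1)
  (Hdelta : is_lim (fun beta => beta * (1 - v beta)) p_infty delta)
  (Hdelta_pos : 0 < delta) :
  is_lim (fun beta => Q gamma h beta (y beta) / beta) p_infty
    (/ 2 * ( (Derive (xi gamma) 1 + h ^ 2) * L
           - RInt (fun q => Derive (Derive (xi gamma)) q * RInt alpha 0 q) 0 1
           + RInt (fun q => / (L - RInt alpha 0 q)) 0 1 )).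
Proof.
  apply (main_sec y alpha L delta v); assumption.
Qed.
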